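(* Let $0<\alpha<1$, $T>0$, $N_T$ a positive integer, $\Delta t=T/N_T$, $t_k=k\Delta t$. Let $\varepsilon>0$ and let $s_i>0,\ \omega_i>0$ ($i=1,\dots,N_{\mathrm{exp}}$) satisfy $\left|t^{-1-\alpha}-\sum_{i=1}^{N_{\mathrm{exp}}}\omega_ie^{-s_it}\right|\leq\varepsilon$ for all $t\in[\Delta t,T]$. Let $1\leq n\leq N_T$, let $u\in C^2[0,t_n]$ and set $u^k=u(t_k)$. Then $$\left|{}_0^C D_t^\alpha u(t)\big|_{t=t_n}-{}^{FC}_{0}\mathbb{D}_t^\alpha u^n\right|\leq\frac{\Delta t^{2-\alpha}}{\Gamma(2-\alpha)}\left(\frac{1-\alpha}{12}+\frac{2^{2-\alpha}}{2-\alpha}-(1+2^{-\alpha})\right)\max_{0\leq t\leq t_n}|u''(t)|+\frac{\alpha\varepsilon\, t_{n-1}}{\Gamma(1-\alpha)}\max_{0\leq t\leq t_{n-1}}|u(t)|.$$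
   Context: The Caputo derivative of order $\alpha\in(0,1)$ is ${}_0^C D_t^\alpha u(t)=\frac{1}{\Gamma(1-\alpha)}\int_0^t\frac{u'(\tau)}{(t-\tau)^\alpha}d\tau$. For values $u^0,\dots,u^{N_T}$ on the grid $t_k=k\Delta t$, let $\Pi_{1,l}u(\tau)=u^{l-1}\frac{t_l-\tau}{\Delta t}+u^l\frac{\tau-t_{l-1}}{\Delta t}$ on $[t_{l-1},t_l]$, let $U_{i}(t_n)=\sum_{l=1}^{n-1}\int_{t_{l-1}}^{t_l}e^{-s_i(t_n-\tau)}\Pi_{1,l}u(\tau)\,d\tau$ (empty sum $=0$ when $n=1$), and define the fast approximation, for $1\le n\le N_T$, $${}^{FC}_{0}\mathbb{D}_t^\alpha u^n=\frac{u^n-u^{n-1}}{\Delta t^\alpha\Gamma(2-\alpha)}+\frac{1}{\Gamma(1-\alpha)}\left[\frac{u^{n-1}}{\Delta t^\alpha}-\frac{u^0}{t_n^\alpha}-\alpha\sum_{i=1}^{N_{\mathrm{exp}}}\omega_iU_i(t_n)\right].$$ (For $n=1$ this equals $\frac{u^1-u^0}{\Delta t^\alpha\Gamma(2-\alpha)}$.) *)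

(* Defs.v *)
From Stdlib Require Import Reals List.
From Coquelicot Require Import Coquelicot.
Open Scope R_scope.

(* finite sum  \sum_{k=a}^{b} F k  (empty, i.e. 0, when b < a) *)
Definition sumk (a b : nat) (F : nat -> R) : R :=
  fold_right Rplus 0 (map F (seq a (S b - a))).

Definition Gamma (x : R) : R :=
  RInt_gen (fun t => Rpower t (x - 1) * exp (- t)) (at_right 0) (Rbar_locally p_infty).

Definition caputo (alpha : R) (u : R -> R) (t : R) : R :=
  / Gamma (1 - alpha) *
  RInt_gen (fun tau => Derive u tau / Rpower (t - tau) alpha) (at_point 0) (at_left t).

Definition tk (dt : R) (k : nat) : R := INR k * dt.

Definition Pi1 (dt : R) (uk : nat -> R) (l : nat) (tau : R) : R :=
  uk (l - 1)%nat * (tk dt l - tau) / dt + uk l * (tau - tk dt (l - 1)) / dt.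

Definition Ui (dt si : R) (uk : nat -> R) (n : nat) : R :=
  sumk 1 (n - 1) (fun l =>
    RInt (fun tau => exp (- si * (tk dt n - tau)) * Pi1 dt uk l tau)
         (tk dt (l - 1)) (tk dt l)).

Definition fast_caputo (alpha dt : R) (Nexp : nat) (s omega : nat -> R)
    (uk : nat -> R) (n : nat) : R :=
  (uk n - uk (n - 1)%nat) / (Rpower dt alpha * Gamma (2 - alpha)) +
  / Gamma (1 - alpha) *
    (uk (n - 1)%nat / Rpower dt alpha - uk 0%nat / Rpower (tk dt n) alpha
     - alpha * sumk 1 Nexp (fun i => omega i * Ui dt (s i) uk n)).

(* max_{a <= t <= b} |f t|  (as the least upper bound; finite for continuous f) *)
Definition max_abs (f : R -> R) (a b : R) : R :=
  real (Lub_Rbar (fun y => exists t, a <= t <= b /\ y = Rabs (f t))).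

(* Main.v *)
Require Import Defs.
From Stdlib Require Import Reals Lra Lia List Classical.
From Coquelicot Require Import Coquelicot.
Open Scope R_scope.

Lemma exR_cont (f : R -> R) a b : (forall z, Rmin a b <= z <= Rmax a b -> continuous f z) -> ex_RInt f a b.
Proof. exact (@ex_RInt_continuous R_CompleteNormedModule f a b). Qed.
Lemma RIntR_Chasles (f : R -> R) a b c : ex_RInt f a b -> ex_RInt f b c -> RInt f a b + RInt f b c = RInt f a c.
Proof. exact (@RInt_Chasles R_CompleteNormedModule f a b c). Qed.
Lemma RIntR_correct (f : R -> R) a b : ex_RInt f a b -> is_RInt f a b (RInt f a b).
Proof. exact (@RInt_correct R_CompleteNormedModule f a b). Qed.
Lemma RIntR_unique (f : R -> R) a b l : is_RInt f a b l -> RInt f a b = l.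
Proof. exact (@is_RInt_unique R_CompleteNormedModule f a b l). Qed.
Lemma RIntR_plus (f g : R -> R) a b : ex_RInt f a b -> ex_RInt g a b -> RInt (fun t => f t + g t) a b = RInt f a b + RInt g a b.
Proof. exact (@RInt_plus R_CompleteNormedModule f g a b). Qed.
Lemma RIntR_minus (f g : R -> R) a b : ex_RInt f a b -> ex_RInt g a b -> RInt (fun t => f t - g t) a b = RInt f a b - RInt g a b.
Proof. exact (@RInt_minus R_CompleteNormedModule f g a b). Qed.
Lemma RIntR_scal (f : R -> R) a b c : ex_RInt f a b -> RInt (fun t => c * f t) a b = c * RInt f a b.
Proof. exact (@RInt_scal R_CompleteNormedModule f a b c). Qed.
Lemma RIntR_const a b c : RInt (fun _ => c) a b = (b - a) * c.
Proof. exact (@RInt_const R_CompleteNormedModule a b c). Qed.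
Lemma RIntR_point (f : R -> R) a : RInt f a a = 0.
Proof. exact (@RInt_point R_CompleteNormedModule a f). Qed.
Lemma RIntR_ext (f g : R -> R) a b : (forall x, Rmin a b < x < Rmax a b -> f x = g x) -> RInt f a b = RInt g a b.
Proof. exact (@RInt_ext R_CompleteNormedModule f g a b). Qed.
Lemma exR_ext (f g : R -> R) a b : (forall x, Rmin a b < x < Rmax a b -> f x = g x) -> ex_RInt f a b -> ex_RInt g a b.
Proof. exact (@ex_RInt_ext R_NormedModule f g a b). Qed.
Lemma exR_plus (f g : R -> R) a b : ex_RInt f a b -> ex_RInt g a b -> ex_RInt (fun t => f t + g t) a b.
Proof. exact (@ex_RInt_plus R_NormedModule f g a b). Qed.
Lemma exR_minus (f g : R -> R) a b : ex_RInt f a b -> ex_RInt g a b -> ex_RInt (fun t => f t - g t) a b.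
Proof. exact (@ex_RInt_minus R_NormedModule f g a b). Qed.
Lemma exR_scal (f : R -> R) a b c : ex_RInt f a b -> ex_RInt (fun t => c * f t) a b.
Proof. exact (@ex_RInt_scal R_NormedModule f a b c). Qed.
Lemma exR_Chasles (f : R -> R) a b c : ex_RInt f a b -> ex_RInt f b c -> ex_RInt f a c.
Proof. exact (@ex_RInt_Chasles R_NormedModule f a b c). Qed.
Lemma isR_derive (f df : R -> R) a b : (forall x, Rmin a b <= x <= Rmax a b -> is_derive f x (df x)) ->
  (forall x, Rmin a b <= x <= Rmax a b -> continuous df x) -> RInt df a b = f b - f a.
Proof. intros H1 H2. apply RIntR_unique. exact (@is_RInt_derive R_CompleteNormedModule f df a b H1 H2). Qed.
Lemma exR_derive (f df : R -> R) a b : (forall x, Rmin a b <= x <= Rmax a b -> is_derive f x (df x)) ->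
  (forall x, Rmin a b <= x <= Rmax a b -> continuous df x) -> ex_RInt df a b.
Proof. intros H1 H2. eexists. exact (@is_RInt_derive R_CompleteNormedModule f df a b H1 H2). Qed.
Lemma RIntR_abs_le (f : R -> R) a b M : a <= b -> ex_RInt f a b -> (forall x, a <= x <= b -> Rabs (f x) <= M) ->
  Rabs (RInt f a b) <= (b - a) * M.
Proof.
  intros Hab Hex HM. apply Rabs_le. split.
  - assert (H := RInt_le (fun _ => - M) f a b Hab (ex_RInt_const _ _ _) Hex).
    rewrite RIntR_const in H. assert (Hh : forall x, a < x < b -> - M <= f x).
    { intros x Hx. specialize (HM x ltac:(lra)). apply Rabs_le_between in HM. lra. }
    specialize (H Hh). lra.
  - assert (H := RInt_le f (fun _ => M) a b Hab Hex (ex_RInt_const _ _ _)).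
    rewrite RIntR_const in H. assert (Hh : forall x, a < x < b -> f x <= M).
    { intros x Hx. specialize (HM x ltac:(lra)). apply Rabs_le_between in HM. lra. }
    specialize (H Hh). lra.
Qed.

Lemma Rpower_pos x y : 0 < Rpower x y.
Proof. unfold Rpower; apply exp_pos. Qed.

Lemma Rpower_minus1 x p : 0 < x -> Rpower x (p - 1) = Rpower x p / x.
Proof.
  intros Hx. unfold Rminus. rewrite Rpower_plus, Rpower_Ropp, Rpower_1 by auto.
  reflexivity.
Qed.

Lemma is_derive_eq (f : R -> R) x l1 l2 : is_derive f x l1 -> l1 = l2 -> is_derive f x l2.
Proof. intros H ->; exact H. Qed.

Lemma is_derive_Rpower x p : 0 < x ->
  is_derive (fun t => Rpower t p) x (p * Rpower x (p - 1)).
Proof.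
  intros Hx. apply is_derive_Reals. now apply derivable_pt_lim_power.
Qed.

Lemma is_derive_Rpower_shift c p x : x < c ->
  is_derive (fun t => Rpower (c - t) p) x (- p * Rpower (c - x) (p - 1)).
Proof.
  intros Hx.
  assert (H1 : is_derive (fun t => c - t) x (-1)).
  { auto_derive; auto; ring. }
  assert (H2 := is_derive_Rpower (c - x) p ltac:(lra)).
  eapply is_derive_eq. apply (is_derive_comp (fun t => Rpower t p) (fun t => c - t) x _ _ H2 H1).
  simpl. change (scal (-1) (p * Rpower (c - x) (p - 1)) = - p * Rpower (c - x) (p - 1)).
  unfold scal; simpl; unfold mult; simpl. ring.
Qed.

Lemma continuous_Rpower_shift c p x : x < c -> continuous (fun t => Rpower (c - t) p) x.
Proof. intros H. apply (@ex_derive_continuous R_AbsRing R_NormedModule). eexists. now apply is_derive_Rpower_shift. Qed.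

Lemma Rpower_small b eps : 0 < b -> 0 < eps ->
  exists d, 0 < d /\ forall s, 0 < s < d -> Rpower s b < eps.
Proof.
  intros Hb He. exists (Rpower eps (/ b)). split. apply Rpower_pos.
  intros s Hs. replace eps with (Rpower (Rpower eps (/b)) b).
  apply Rlt_Rpower_l; lra.
  rewrite Rpower_mult. replace (/b * b) with 1 by (field; lra). now rewrite Rpower_1.
Qed.

Lemma cR_mult (f g : R -> R) x : continuous f x -> continuous g x -> continuous (fun t => f t * g t) x.
Proof. intros; now apply (continuous_mult f g). Qed.
Lemma cR_plus (f g : R -> R) x : continuous f x -> continuous g x -> continuous (fun t => f t + g t) x.
Proof. intros; now apply (continuous_plus f g). Qed.
Lemma cR_opp (f : R -> R) x : continuous f x -> continuous (fun t => - f t) x.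
Proof. intros; now apply (continuous_opp f). Qed.
Lemma cR_minus (f g : R -> R) x : continuous f x -> continuous g x -> continuous (fun t => f t - g t) x.
Proof. intros; apply cR_plus; auto; now apply cR_opp. Qed.
Lemma cR_const (c x : R) : continuous (fun _ => c) x.
Proof. apply continuous_const. Qed.
Lemma cR_id (x : R) : continuous (fun t => t) x.
Proof. apply continuous_id. Qed.
Lemma cR_abs (f : R -> R) x : continuous f x -> continuous (fun t => Rabs (f t)) x.
Proof. intros; apply (continuous_comp f Rabs); auto; apply continuous_Rabs. Qed.
Lemma cR_exp (f : R -> R) x : continuous f x -> continuous (fun t => exp (f t)) x.
Proof. intros; apply (continuous_comp f exp); auto.
  apply continuity_pt_filterlim. apply derivable_continuous_pt, derivable_pt_exp. Qed.

Lemma bounded_cont (f : R -> R) a b : a <= b ->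
  (forall x, a <= x <= b -> continuous f x) ->
  exists M, forall x, a <= x <= b -> Rabs (f x) <= M.
Proof.
  intros Hab Hc.
  destruct (continuity_ab_maj (fun x => Rabs (f x)) a b Hab) as [m [Hm _]].
  { intros c Hcc. apply continuity_pt_filterlim. now apply cR_abs, Hc. }
  exists (Rabs (f m)). intros; now apply Hm.
Qed.

Lemma max_abs_ge (f : R -> R) a b x :
  (exists M, forall y, a <= y <= b -> Rabs (f y) <= M) -> a <= x <= b ->
  Rabs (f x) <= max_abs f a b.
Proof.
  intros [M HM] Hx. unfold max_abs.
  destruct (Lub_Rbar_correct (fun y => exists t, a <= t <= b /\ y = Rabs (f t))) as [Hub Hl].
  assert (H1 : Rbar_le (Rabs (f x)) (Lub_Rbar (fun y => exists t, a <= t <= b /\ y = Rabs (f t)))).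
  { apply Hub. exists x; auto. }
  assert (H2 : Rbar_le (Lub_Rbar (fun y => exists t, a <= t <= b /\ y = Rabs (f t))) M).
  { apply Hl. intros y [t [Ht ->]]. simpl. now apply HM. }
  destruct (Lub_Rbar _); simpl in *; tauto.
Qed.

Lemma max_abs_cont (f : R -> R) a b x : a <= b ->
  (forall y, a <= y <= b -> continuous f y) -> a <= x <= b ->
  Rabs (f x) <= max_abs f a b.
Proof. intros Hab Hc Hx. apply max_abs_ge; auto. now apply bounded_cont. Qed.

Lemma is_derive_eq3 (f : R -> R) x l1 l2 : is_derive f x l1 -> l1 = l2 -> is_derive f x l2.
Proof. intros H ->; exact H. Qed.

Lemma chord (g g1 g2 : R -> R) a b :
  a < b ->
  (forall x, a <= x <= b -> is_derive g x (g1 x)) ->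
  (forall x, a <= x <= b -> is_derive g1 x (g2 x)) ->
  (forall x, a <= x <= b -> 0 <= g2 x) ->
  forall t, a <= t <= b -> (b - a) * g t <= (b - t) * g a + (t - a) * g b.
Proof.
  intros Hab Hg Hg1 Hg2 t Ht.
  destruct (Req_dec t a) as [->|Hta]. lra.
  destruct (Req_dec t b) as [->|Htb]. lra.
  destruct (MVT_cor2 g g1 a t) as [x1 [E1 Hx1]]. lra.
  { intros c Hc. apply is_derive_Reals, Hg. lra. }
  destruct (MVT_cor2 g g1 t b) as [x2 [E2 Hx2]]. lra.
  { intros c Hc. apply is_derive_Reals, Hg. lra. }
  destruct (MVT_cor2 g1 g2 x1 x2) as [y [E3 Hy]]. lra.
  { intros c Hc. apply is_derive_Reals, Hg1. lra. }
  assert (0 <= g2 y) by (apply Hg2; lra).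
  assert (0 <= g1 x2 - g1 x1) by (rewrite E3; apply Rmult_le_pos; lra).
  assert (HH : (b - t) * g a + (t - a) * g b - (b - a) * g t = (t - a) * (b - t) * (g1 x2 - g1 x1)).
  { replace (g b) with (g t + g1 x2 * (b - t)) by lra.
    replace (g a) with (g t - g1 x1 * (t - a)) by lra. ring. }
  assert (0 <= (t - a) * (b - t) * (g1 x2 - g1 x1)).
  { apply Rmult_le_pos; auto. apply Rmult_le_pos; lra. }
  lra.
Qed.

Lemma dq (f : R -> R) x d M : is_derive f x d -> is_derive (fun x => f x + M / 2 * (x * x)) x (d + M * x).
Proof. intros H. eapply is_derive_eq3. apply (is_derive_plus f (fun x => M/2*(x*x))). exact H.
  auto_derive; auto. unfold plus; simpl. field. Qed.
Lemma dl (f : R -> R) x d M : is_derive f x d -> is_derive (fun x => f x + M * x) x (d + M).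
Proof. intros H. eapply is_derive_eq3. apply (is_derive_plus f (fun x => M*x)). exact H.
  auto_derive; auto. unfold plus; simpl. ring. Qed.

Lemma interp_err (u u1 u2 : R -> R) a b M :
  a < b ->
  (forall x, a <= x <= b -> is_derive u x (u1 x)) ->
  (forall x, a <= x <= b -> is_derive u1 x (u2 x)) ->
  (forall x, a <= x <= b -> Rabs (u2 x) <= M) ->
  forall t, a <= t <= b ->
  Rabs ((b - a) * u t - ((b - t) * u a + (t - a) * u b)) <= M / 2 * (t - a) * (b - t) * (b - a).
Proof.
  intros Hab Hu Hu1 Hu2 t Ht.
  assert (Hp := chord (fun x => u x + M / 2 * (x * x)) (fun x => u1 x + M * x) (fun x => u2 x + M) a b Hab).
  assert (Hm := chord (fun x => - u x + M / 2 * (x * x)) (fun x => - u1 x + M * x) (fun x => - u2 x + M) a b Hab).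
  simpl in Hp, Hm.
  refine (_ (Hp _ _ _ t Ht)); clear Hp.
  refine (_ (Hm _ _ _ t Ht)); clear Hm.
  - intros H1 H2. apply Rabs_le. split; nra.
  - intros x Hx. apply dq. apply (is_derive_opp u). now apply Hu.
  - intros x Hx. apply dl. apply (is_derive_opp u1). now apply Hu1.
  - intros x Hx. specialize (Hu2 x Hx). apply Rabs_le_between in Hu2. lra.
  - intros x Hx. apply dq. now apply Hu.
  - intros x Hx. apply dl. now apply Hu1.
  - intros x Hx. specialize (Hu2 x Hx). apply Rabs_le_between in Hu2. lra.
Qed.

Lemma is_RInt_gen_intro (f : R -> R) (Fa Fb : (R -> Prop) -> Prop) l :
  (forall eps, 0 < eps -> exists Qa Qb, Fa Qa /\ Fb Qb /\
     forall a b, Qa a -> Qb b -> ex_RInt f a b /\ Rabs (RInt f a b - l) < eps) ->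
  is_RInt_gen f Fa Fb l.
Proof.
  intros H P [eps HP].
  destruct (H eps (cond_pos eps)) as [Qa [Qb [HA [HB HQ]]]].
  apply (Filter_prod _ _ _ Qa Qb HA HB).
  intros a b Ha Hb. destruct (HQ a b Ha Hb) as [Hex Hlt].
  exists (RInt f a b). split. now apply RIntR_correct.
  apply HP. exact Hlt.
Qed.

Lemma cont_Rpower p t : 0 < t -> continuous (fun s => Rpower s p) t.
Proof.
  intros Ht. apply (@ex_derive_continuous R_AbsRing R_NormedModule). eexists.
  apply is_derive_Reals. now apply derivable_pt_lim_power.
Qed.

Lemma cont_exp_opp t : continuous (fun s => exp (- s)) t.
Proof.
  apply (@ex_derive_continuous R_AbsRing R_NormedModule). eexists.
  apply is_derive_Reals. apply (derivable_pt_lim_comp (fun s => -s) exp).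
  apply derivable_pt_lim_opp, derivable_pt_lim_id. apply derivable_pt_lim_exp.
Qed.

Lemma exp_le_exp x y : x <= y -> exp x <= exp y.
Proof. intros [H|H]. now apply Rlt_le, exp_increasing. rewrite H; lra. Qed.

Lemma Rpower_base1 p : Rpower 1 p = 1.
Proof. unfold Rpower. rewrite ln_1, Rmult_0_r. apply exp_0. Qed.

Lemma deriv_Rpow_scal c p t : 0 < t -> is_derive (fun s => c * Rpower s p) t (c * (p * Rpower t (p-1))).
Proof. intros Ht. apply is_derive_Reals. apply derivable_pt_lim_scal. now apply derivable_pt_lim_power. Qed.

Lemma Rpower_le1 t p : 0 < t <= 1 -> p <= 0 -> 1 <= Rpower t p.
Proof.
  intros Ht Hp. unfold Rpower. rewrite <- exp_0. apply exp_le_exp.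
  assert (ln t <= 0). { rewrite <- ln_1. apply ln_le; lra. }
  nra.
Qed.

Lemma Rpower_ge1 t p : 1 <= t -> p <= 0 -> Rpower t p <= 1.
Proof.
  intros Ht Hp. unfold Rpower. rewrite <- exp_0. apply exp_le_exp.
  assert (0 <= ln t). { rewrite <- ln_1. apply ln_le; lra. }
  nra.
Qed.

Section G.
Variable x : R.
Hypothesis Hx : 0 < x < 1.
Let f := fun t => Rpower t (x - 1) * exp (- t).

Lemma f_cont t : 0 < t -> continuous f t.
Proof. intros Ht. unfold f. apply (continuous_mult (fun s => Rpower s (x-1)) (fun s => exp (-s))).
  now apply cont_Rpower. apply cont_exp_opp. Qed.

Lemma f_ex a b : 0 < a -> 0 < b -> ex_RInt f a b.
Proof. intros Ha Hb. apply exR_cont. intros z Hz. apply f_cont.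
  destruct (Rle_dec a b); [rewrite Rmin_left in Hz|rewrite Rmin_right in Hz]; lra. Qed.

Lemma f_pos t : 0 < f t.
Proof. unfold f. apply Rmult_lt_0_compat. apply Rpower_pos. apply exp_pos. Qed.

Lemma f_mono a' a b b' : 0 < a' -> a' <= a -> a <= b -> b <= b' -> RInt f a b <= RInt f a' b'.
Proof.
  intros H1 H2 H3 H4.
  rewrite <- (RIntR_Chasles f a' a b'), <- (RIntR_Chasles f a b b') by (apply f_ex; lra).
  assert (0 <= RInt f a' a) by (apply RInt_ge_0; auto; [apply f_ex; lra| intros; apply Rlt_le, f_pos]).
  assert (0 <= RInt f b b') by (apply RInt_ge_0; auto; [apply f_ex; lra| intros; apply Rlt_le, f_pos]).
  lra.
Qed.

Lemma f_bound a b : 0 < a <= 1 -> 1 <= b -> RInt f a b <= / x + 1.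
Proof.
  intros Ha Hb.
  rewrite <- (RIntR_Chasles f a 1 b) by (apply f_ex; lra).
  assert (E1 : RInt f a 1 <= / x).
  { apply Rle_trans with (RInt (fun t => Rpower t (x - 1)) a 1).
    apply RInt_le; try lra. apply f_ex; lra.
    apply exR_cont. intros z Hz. rewrite Rmin_left, Rmax_right in Hz by lra. apply cont_Rpower; lra.
    intros t Ht. unfold f. rewrite <- (Rmult_1_r (Rpower t (x-1))) at 2.
    apply Rmult_le_compat_l. apply Rlt_le, Rpower_pos.
    rewrite <- exp_0. apply exp_le_exp; lra.
    rewrite (isR_derive (fun t => Rpower t x / x)).
    rewrite Rpower_base1. assert (0 < Rpower a x / x).
    { apply Rdiv_lt_0_compat. apply Rpower_pos. lra. }
    assert (/ x = 1 / x) by (field; lra). lra.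
    intros t Ht. rewrite Rmin_left, Rmax_right in Ht by lra.
    eapply is_derive_eq. apply (is_derive_ext (fun t => / x * Rpower t x) (fun t => Rpower t x / x)). intros y; unfold Rdiv; apply Rmult_comm.
    apply deriv_Rpow_scal; lra. change (/ x * (x * Rpower t (x - 1)) = Rpower t (x - 1)); field; lra.
    intros t Ht. rewrite Rmin_left, Rmax_right in Ht by lra. apply cont_Rpower; lra. }
  assert (E2 : RInt f 1 b <= 1).
  { apply Rle_trans with (RInt (fun t => exp (- t)) 1 b).
    apply RInt_le; try lra. apply f_ex; lra.
    apply exR_cont. intros z Hz. apply cont_exp_opp.
    intros t Ht. unfold f. rewrite <- (Rmult_1_l (exp (- t))) at 2.
    apply Rmult_le_compat_r. apply Rlt_le, exp_pos. apply Rpower_ge1; lra.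
    rewrite (isR_derive (fun t => - exp (- t))).
    assert (0 < exp (-b)) by apply exp_pos. assert (exp (- (1)) <= exp 0) by (apply exp_le_exp; lra). rewrite exp_0 in *.
    lra.
    intros t Ht. auto_derive; auto. ring.
    intros t Ht. apply cont_exp_opp. }
  lra.
Qed.

Definition SG v := exists a b, 0 < a <= 1 /\ 1 <= b /\ v = RInt f a b.

Lemma SG_lub : { l | is_lub SG l }.
Proof.
  apply completeness.
  - exists (/ x + 1). intros v [a [b [Ha [Hb ->]]]]. now apply f_bound.
  - exists (RInt f 1 1). exists 1, 1. repeat split; lra.
Qed.

Lemma G_lim : exists l, 0 < l /\ forall eps, 0 < eps -> exists a0 b0, 0 < a0 /\ 1 <= b0 /\
  forall a b, 0 < a < a0 -> b0 < b -> ex_RInt f a b /\ Rabs (RInt f a b - l) < eps.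
Proof.
  destruct SG_lub as [l [Hub Hlst]].
  exists l. split.
  - apply Rlt_le_trans with (RInt f (/2) 1).
    apply RInt_gt_0. lra. intros; apply f_pos. intros; apply f_cont; lra.
    apply Hub. exists (/2), 1. repeat split; lra.
  - intros eps He.
    assert (Hex : exists a0 b0, 0 < a0 <= 1 /\ 1 <= b0 /\ l - eps < RInt f a0 b0).
    { apply NNPP. intros Hn. assert (l <= l - eps); [|lra].
      apply Hlst. intros v [a [b [Ha [Hb ->]]]].
      apply Rnot_lt_le. intros Hc. apply Hn. exists a, b. auto. }
    destruct Hex as [a0 [b0 [Ha0 [Hb0 Hlt]]]].
    exists a0, b0. split; [lra|split;[lra|]].
    intros a b Ha Hb. split. apply f_ex; lra.
    assert (RInt f a0 b0 <= RInt f a b) by (apply f_mono; lra).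
    assert (RInt f a b <= l) by (apply Hub; exists a, b; repeat split; lra).
    apply Rabs_lt_between'. lra.
Qed.

Lemma gen_intro_std (g : R -> R) l :
  (forall eps, 0 < eps -> exists a0 b0, 0 < a0 /\
    forall a b, 0 < a < a0 -> b0 < b -> ex_RInt g a b /\ Rabs (RInt g a b - l) < eps) ->
  is_RInt_gen g (at_right 0) (Rbar_locally p_infty) l.
Proof.
  intros H. apply is_RInt_gen_intro. intros eps He.
  destruct (H eps He) as [a0 [b0 [Ha0 Hab]]].
  exists (fun a => 0 < a < a0), (fun b => b0 < b). split; [|split].
  + exists (mkposreal a0 Ha0). intros y Hy Hy0.
    change (Rabs (y - 0) < a0) in Hy. split; auto. rewrite Rminus_0_r, Rabs_right in Hy; lra.
  + exists b0. auto.
  + intros a b Ha Hb. now apply Hab.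
Qed.
End G.

Lemma Gamma_rel x : 0 < x < 1 -> 0 < Gamma x /\ Gamma (x + 1) = x * Gamma x.
Proof.
  intros Hx.
  destruct (G_lim x Hx) as [l [Hl Hlim]].
  assert (E1 : Gamma x = l).
  { unfold Gamma. apply (is_RInt_gen_unique (V := R_CompleteNormedModule)).
    apply gen_intro_std. intros eps He. destruct (Hlim eps He) as [a0 [b0 [? [? ?]]]].
    exists a0, b0; auto. }
  rewrite E1. split; auto.
  set (f := fun t => Rpower t (x - 1) * exp (- t)).
  set (g := fun t => Rpower t (x + 1 - 1) * exp (- t)).
  assert (Hrel : forall a b, 0 < a -> 0 < b ->
    ex_RInt g a b /\ RInt g a b = Rpower a x * exp (- a) - Rpower b x * exp (- b) + x * RInt f a b).
  { intros a b Ha Hb.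
    assert (Hf : ex_RInt f a b) by (apply f_ex; auto).
    assert (Hd : forall t, Rmin a b <= t <= Rmax a b -> 0 < t).
    { intros t Ht. destruct (Rle_dec a b); [rewrite Rmin_left in Ht|rewrite Rmin_right in Ht]; lra. }
    assert (Hh : ex_RInt (fun t => g t - x * f t) a b /\
                 RInt (fun t => g t - x * f t) a b = - Rpower b x * exp (- b) - - Rpower a x * exp (- a)).
    { split.
      - apply (exR_derive (fun t => - Rpower t x * exp (- t))).
        + intros t Ht. specialize (Hd t Ht). unfold g, f.
          replace (x + 1 - 1) with x by ring.
          eapply is_derive_eq. apply (is_derive_mult (fun t => - Rpower t x) (fun t => exp (- t))).
          apply (is_derive_opp (fun t => Rpower t x)). apply is_derive_Reals, derivable_pt_lim_power; auto.
          auto_derive; auto. intros; apply Rmult_comm.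
          change ((- (x * Rpower t (x - 1))) * exp (- t) + - Rpower t x * ((-1) * exp (- t)) =
                   Rpower t x * exp (- t) - x * (Rpower t (x - 1) * exp (- t))). ring.
        + intros t Ht. specialize (Hd t Ht). unfold g, f.
          apply cR_minus. apply cR_mult. apply cont_Rpower; auto. apply cont_exp_opp.
          apply cR_mult. apply cR_const. apply cR_mult. apply cont_Rpower; auto. apply cont_exp_opp.
      - apply (isR_derive (fun t => - Rpower t x * exp (- t))).
        + intros t Ht. specialize (Hd t Ht). unfold g, f.
          replace (x + 1 - 1) with x by ring.
          eapply is_derive_eq. apply (is_derive_mult (fun t => - Rpower t x) (fun t => exp (- t))).
          apply (is_derive_opp (fun t => Rpower t x)). apply is_derive_Reals, derivable_pt_lim_power; auto.
          auto_derive; auto. intros; apply Rmult_comm.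
          change ((- (x * Rpower t (x - 1))) * exp (- t) + - Rpower t x * ((-1) * exp (- t)) =
                   Rpower t x * exp (- t) - x * (Rpower t (x - 1) * exp (- t))). ring.
        + intros t Ht. specialize (Hd t Ht). unfold g, f.
          apply cR_minus. apply cR_mult. apply cont_Rpower; auto. apply cont_exp_opp.
          apply cR_mult. apply cR_const. apply cR_mult. apply cont_Rpower; auto. apply cont_exp_opp. }
    destruct Hh as [Hh1 Hh2].
    assert (Hg : ex_RInt g a b).
    { apply (exR_ext (fun t => (g t - x * f t) + x * f t)). intros; ring.
      apply exR_plus; auto. apply exR_scal; auto. }
    split; auto.
    rewrite RIntR_minus, RIntR_scal in Hh2 by (auto; apply exR_scal; auto). lra. }
  fold g. unfold Gamma. fold g. apply (is_RInt_gen_unique (V := R_CompleteNormedModule)).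
  apply gen_intro_std. intros eps He.
  assert (He3 : 0 < eps / 3) by lra.
  destruct (Hlim (eps / 3 / x)) as [a0 [b0 [Ha0 [Hb0 Hab]]]].
  { apply Rdiv_lt_0_compat; lra. }
  destruct (Rpower_small x (eps / 3) ltac:(lra) He3) as [d [Hd Hsm]].
  exists (Rmin a0 d), (Rmax b0 (12 / eps)). split. apply Rmin_pos; lra.
  intros a b Ha Hb.
  assert (Ha0' : a < a0) by (apply Rlt_le_trans with (Rmin a0 d); [lra|apply Rmin_l]).
  assert (Hd' : a < d) by (apply Rlt_le_trans with (Rmin a0 d); [lra|apply Rmin_r]).
  assert (Hb0' : b0 < b) by (apply Rle_lt_trans with (Rmax b0 (12/eps)); [apply Rmax_l|lra]).
  assert (Hbe : 12 / eps < b) by (apply Rle_lt_trans with (Rmax b0 (12/eps)); [apply Rmax_r|lra]).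
  destruct (Hab a b ltac:(lra) Hb0') as [Hex Hlt].
  destruct (Hrel a b ltac:(lra) ltac:(lra)) as [Hg Heq].
  split; auto. rewrite Heq.
  assert (T1 : 0 < Rpower a x * exp (- a) < eps / 3).
  { split. apply Rmult_lt_0_compat; [apply Rpower_pos|apply exp_pos].
    assert (exp (- a) <= 1) by (rewrite <- exp_0; apply exp_le_exp; lra).
    assert (Rpower a x < eps / 3) by (apply Hsm; lra).
    assert (0 < Rpower a x) by apply Rpower_pos. nra. }
  assert (T2 : 0 < Rpower b x * exp (- b) < eps / 3).
  { split. apply Rmult_lt_0_compat; [apply Rpower_pos|apply exp_pos].
    assert (Hb1 : Rpower b x <= b).
    { rewrite <- (Rpower_1 b) at 2 by lra. apply Rle_Rpower; lra. }
    assert (Hexp : b * b / 4 <= exp b).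
    { replace b with (b / 2 + b / 2) at 3 by field. rewrite exp_plus.
      assert (b / 2 <= exp (b / 2)) by (assert (H := exp_ineq1_le (b / 2)); lra).
      assert (0 <= b / 2) by lra. nra. }
    assert (Hpe : 0 < exp b) by apply exp_pos.
    rewrite exp_Ropp.
    assert (b * / exp b <= 4 / b).
    { apply Rmult_le_reg_r with (exp b); auto. rewrite Rmult_assoc, Rinv_l by lra.
      apply Rmult_le_reg_r with (b); [lra|]. field_simplify; try lra. }
    assert (4 / b < eps / 3).
    { apply Rmult_lt_reg_r with b; [lra|]. field_simplify; try lra.
      apply Rmult_lt_reg_r with (/ eps); [apply Rinv_0_lt_compat; lra|].
      replace (12 / eps) with (12 * / eps) in Hbe by (unfold Rdiv; auto).
      field_simplify; lra. }
    assert (0 < / exp b) by (apply Rinv_0_lt_compat; auto).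
    assert (Rpower b x * / exp b <= b * / exp b) by (apply Rmult_le_compat_r; lra).
    lra. }
  assert (T3 : Rabs (x * RInt f a b - x * l) < eps / 3).
  { rewrite <- Rmult_minus_distr_l, Rabs_mult, Rabs_right by lra.
    apply Rmult_lt_reg_l with (/ x). apply Rinv_0_lt_compat; lra.
    rewrite <- Rmult_assoc, Rinv_l, Rmult_1_l by lra.
    replace (/ x * (eps / 3)) with (eps / 3 / x) by (field; lra). exact Hlt. }
  apply Rabs_lt_between in T3. apply Rabs_lt_between. lra.
Qed.

Definition qp (p s : R) := if Rlt_dec 0 s then Rpower s p else 0.

Lemma qp_pos p s : 0 < s -> qp p s = Rpower s p.
Proof. intros H; unfold qp; destruct (Rlt_dec 0 s); tauto. Qed.
Lemma qp_npos p s : s <= 0 -> qp p s = 0.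
Proof. intros H; unfold qp; destruct (Rlt_dec 0 s); auto; lra. Qed.
Lemma qp_ge0 p s : 0 <= qp p s.
Proof. unfold qp; destruct (Rlt_dec 0 s). apply Rlt_le, Rpower_pos. lra. Qed.

Lemma loc_gt (s c : R) : c < s -> locally s (fun y => c < y).
Proof. intros H. assert (Hp : 0 < s - c) by lra. exists (mkposreal _ Hp). intros y Hy.
  change (Rabs (y - s) < s - c) in Hy. apply Rabs_lt_between in Hy. lra. Qed.
Lemma loc_lt (s c : R) : s < c -> locally s (fun y => y < c).
Proof. intros H. assert (Hp : 0 < c - s) by lra. exists (mkposreal _ Hp). intros y Hy.
  change (Rabs (y - s) < c - s) in Hy. apply Rabs_lt_between in Hy. lra. Qed.

Lemma qp_cont p s : 0 < p -> continuous (qp p) s.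
Proof.
  intros Hp. destruct (Rtotal_order s 0) as [Hs|[Hs|Hs]].
  - apply (continuous_ext_loc (qp p) (fun _ => 0)). 
    generalize (loc_lt s 0 Hs). apply filter_imp. intros y Hy. symmetry. apply qp_npos; lra.
    apply continuous_const.
  - subst. apply continuity_pt_filterlim. intros eps He.
    destruct (Rpower_small p eps Hp He) as [d [Hd Hsm]].
    exists d. split. lra. intros y [_ Hy]. simpl in Hy. unfold R_dist in *.
    rewrite (qp_npos p 0) by lra. rewrite Rminus_0_r in *.
    unfold qp. destruct (Rlt_dec 0 y).
    + simpl; unfold R_dist; rewrite Rminus_0_r. rewrite Rabs_right. apply Hsm. rewrite Rabs_right in Hy; lra. apply Rle_ge, Rlt_le, Rpower_pos.
    + simpl; unfold R_dist; rewrite Rminus_0_r, Rabs_R0; lra.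
  - apply (continuous_ext_loc (qp p) (fun y => Rpower y p)). 
    generalize (loc_gt s 0 Hs). apply filter_imp. intros y Hy. symmetry. apply qp_pos; lra.
    apply cont_Rpower; lra.
Qed.

Lemma qp_deriv p s : 1 < p -> is_derive (qp p) s (p * qp (p - 1) s).
Proof.
  intros Hp. destruct (Rtotal_order s 0) as [Hs|[Hs|Hs]].
  - rewrite qp_npos by lra. apply (is_derive_ext_loc (fun _ => 0)).
    generalize (loc_lt s 0 Hs). apply filter_imp. intros y Hy. symmetry. apply qp_npos; lra.
    replace (p * 0) with (@zero R_NormedModule) by (simpl; unfold zero; simpl; ring).
    apply is_derive_const.
  - subst. rewrite qp_npos by lra. rewrite Rmult_0_r. apply is_derive_Reals.
    intros eps He. destruct (Rpower_small (p - 1) eps ltac:(lra) He) as [d [Hd Hsm]].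
    exists (mkposreal d Hd). intros y Hy0 Hy. simpl in Hy.
    rewrite Rplus_0_l, (qp_npos p 0), Rminus_0_r, Rminus_0_r by lra.
    unfold qp. destruct (Rlt_dec 0 y).
    + rewrite <- (Rpower_1 y) at 2 by lra. unfold Rdiv. rewrite <- Rpower_Ropp, <- Rpower_plus.
      rewrite Rabs_right. apply Hsm. rewrite Rabs_right in Hy; lra.
      apply Rle_ge, Rlt_le, Rpower_pos.
    + unfold Rdiv; rewrite Rmult_0_l, Rabs_R0; lra.
  - rewrite qp_pos by lra. apply (is_derive_ext_loc (fun y => Rpower y p)).
    generalize (loc_gt s 0 Hs). apply filter_imp. intros y Hy. symmetry. apply qp_pos; lra.
    apply is_derive_Rpower; lra.
Qed.

Ltac req := match goal with |- @eq _ ?x ?y => change (@eq R x y) end.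

Section Main.
Variables (a h : R) (m : nat) (u : R -> R).
Hypothesis Ha : 0 < a < 1.
Hypothesis Hh : 0 < h.
Let tn := tk h (S m).
Let tm := tk h m.
Hypothesis Hu : forall t, 0 <= t <= tn ->
     ex_derive u t /\ ex_derive (Derive u) t /\ continuous (Derive_n u 2) t.
Let u1 := Derive u.
Let u2 := Derive_n u 2.
Let b := 1 - a.

Lemma tn_eq : tn = tm + h.
Proof. unfold tn, tm, tk. rewrite S_INR. ring. Qed.
Lemma tm_ge0 : 0 <= tm.
Proof. unfold tm, tk. apply Rmult_le_pos. apply pos_INR. lra. Qed.

Lemma D1 t : 0 <= t <= tn -> is_derive u t (u1 t).
Proof. intros H. apply Derive_correct. apply Hu; auto. Qed.
Lemma D2 t : 0 <= t <= tn -> is_derive u1 t (u2 t).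
Proof. intros H. apply Derive_correct. apply Hu; auto. Qed.
Lemma C0 t : 0 <= t <= tn -> continuous u t.
Proof. intros H. apply (@ex_derive_continuous R_AbsRing R_NormedModule). apply Hu; auto. Qed.
Lemma C1 t : 0 <= t <= tn -> continuous u1 t.
Proof. intros H. apply (@ex_derive_continuous R_AbsRing R_NormedModule). apply Hu; auto. Qed.
Lemma C2 t : 0 <= t <= tn -> continuous u2 t.
Proof. intros H. apply Hu; auto. Qed.

Let Mpp := max_abs u2 0 tn.
Lemma Mpp_ge t : 0 <= t <= tn -> Rabs (u2 t) <= Mpp.
Proof. intros H. apply max_abs_cont; auto. pose proof tm_ge0; pose proof tn_eq; lra. apply C2. Qed.

Let g := fun tau => Derive u tau / Rpower (tn - tau) a.
Lemma g_eq tau : g tau = u1 tau * Rpower (tn - tau) (- a).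
Proof. unfold g. rewrite Rpower_Ropp. reflexivity. Qed.

Lemma g_cont tau : 0 <= tau < tn -> continuous g tau.
Proof.
  intros H. apply (continuous_ext_loc g (fun t => u1 t * Rpower (tn - t) (- a))).
  apply filter_forall. intros; symmetry; apply g_eq.
  apply cR_mult. apply C1; lra. apply continuous_Rpower_shift; lra.
Qed.

Lemma g_ex x y : 0 <= x <= y -> y < tn -> ex_RInt g x y.
Proof. intros H1 H2. apply exR_cont. intros z Hz. rewrite Rmin_left, Rmax_right in Hz by lra.
  apply g_cont. lra. Qed.


Let F := fun tau => u2 tau * qp b (tn - tau).
Lemma F_cont tau : 0 <= tau <= tn -> continuous F tau.
Proof.
  intros H. apply cR_mult. apply C2; auto.
  apply (continuous_comp (fun t => tn - t) (qp b)).
  apply cR_minus. apply cR_const. apply cR_id. apply qp_cont. unfold b; lra.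
Qed.

Let Phi2 := fun tau => - u1 tau * Rpower (tn - tau) b / b.

Lemma local_int y : tm <= y < tn ->
  ex_RInt g tm y /\ RInt g tm y = Phi2 y - Phi2 tm + / b * RInt F tm y.
Proof.
  intros Hy. pose proof tm_ge0 as H0. pose proof tn_eq as E.
  assert (Hb : 0 < b) by (unfold b; lra).
  set (df := fun t => u1 t * Rpower (tn - t) (- a) - / b * F t).
  assert (Hd : forall t, Rmin tm y <= t <= Rmax tm y -> is_derive Phi2 t (df t)).
  { intros t Ht. rewrite Rmin_left, Rmax_right in Ht by lra.
    unfold Phi2, df, F. rewrite qp_pos by lra.
    eapply is_derive_eq.
    apply (is_derive_ext (fun t => (- / b) * (u1 t * Rpower (tn - t) b))).
    intros z. simpl. unfold Rdiv. ring.
    apply (is_derive_scal (fun t => u1 t * Rpower (tn - t) b)).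
    apply (is_derive_mult u1 (fun t => Rpower (tn - t) b)).
    apply D2; lra. apply is_derive_Rpower_shift; lra. intros; apply Rmult_comm.
    change (- / b * (u2 t * Rpower (tn - t) b + u1 t * (- b * Rpower (tn - t) (b - 1))) =
            u1 t * Rpower (tn - t) (- a) - / b * (u2 t * Rpower (tn - t) b)).
    replace (b - 1) with (- a) by (unfold b; ring). field. lra. }
  assert (Hc : forall t, Rmin tm y <= t <= Rmax tm y -> continuous df t).
  { intros t Ht. rewrite Rmin_left, Rmax_right in Ht by lra.
    unfold df. apply cR_minus. apply cR_mult. apply C1; lra. apply continuous_Rpower_shift; lra.
    apply cR_mult. apply cR_const. apply F_cont; lra. }
  assert (Hex1 : ex_RInt df tm y) by (apply (exR_derive Phi2); auto).
  assert (Hex2 : ex_RInt F tm y).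
  { apply exR_cont. intros z Hz. rewrite Rmin_left, Rmax_right in Hz by lra. apply F_cont; lra. }
  assert (Heq : forall t, g t = df t + / b * F t).
  { intros t. rewrite g_eq. unfold df. ring. }
  assert (Hex : ex_RInt g tm y).
  { apply (exR_ext (fun t => df t + / b * F t)). intros; now rewrite Heq.
    apply exR_plus; auto. apply exR_scal; auto. }
  split; auto.
  rewrite (RIntR_ext g (fun t => df t + / b * F t)) by (intros; apply Heq).
  rewrite RIntR_plus, RIntR_scal; auto. 2: apply exR_scal; auto.
  rewrite (isR_derive Phi2 df) by auto. reflexivity.
Qed.

Let Lval := - Phi2 tm + / b * RInt F tm tn.

Lemma F_ex x y : 0 <= x <= y -> y <= tn -> ex_RInt F x y.
Proof. intros H1 H2. apply exR_cont. intros z Hz. rewrite Rmin_left, Rmax_right in Hz by lra.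
  apply F_cont. lra. Qed.

Lemma local_lim eps : 0 < eps -> exists d, 0 < d <= h /\
  forall y, tn - d < y < tn -> Rabs (RInt g tm y - Lval) < eps.
Proof.
  intros He. pose proof tm_ge0 as H0. pose proof tn_eq as E.
  assert (Hb : 0 < b) by (unfold b; lra).
  destruct (bounded_cont u1 0 tn ltac:(lra)) as [M1 HM1]. { intros; apply C1; auto. }
  destruct (bounded_cont F 0 tn ltac:(lra)) as [MF HMF]. { intros; apply F_cont; auto. }
  assert (HM1p : 0 <= M1) by (specialize (HM1 0 ltac:(lra)); pose proof (Rabs_pos (u1 0)); lra).
  assert (HMFp : 0 <= MF) by (specialize (HMF 0 ltac:(lra)); pose proof (Rabs_pos (F 0)); lra).
  assert (He1 : 0 < eps * b / (2 * (M1 + 1))) by (apply Rdiv_lt_0_compat; nra).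
  destruct (Rpower_small b _ Hb He1) as [d1 [Hd1 Hsm]].
  set (d2 := eps * b / (2 * (MF + 1))).
  assert (Hd2 : 0 < d2) by (unfold d2; apply Rdiv_lt_0_compat; nra).
  exists (Rmin h (Rmin d1 d2)). split.
  { split. apply Rmin_pos; auto. apply Rmin_pos; auto. apply Rmin_l. }
  intros y Hy.
  assert (Hy1 : tn - y < h) by (pose proof (Rmin_l h (Rmin d1 d2)); lra).
  assert (Hy2 : tn - y < d1) by (pose proof (Rmin_r h (Rmin d1 d2)); pose proof (Rmin_l d1 d2); lra).
  assert (Hy3 : tn - y < d2) by (pose proof (Rmin_r h (Rmin d1 d2)); pose proof (Rmin_r d1 d2); lra).
  destruct (local_int y ltac:(lra)) as [_ Hint].
  rewrite Hint. unfold Lval.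
  rewrite <- (RIntR_Chasles F tm y tn) by (apply F_ex; lra).
  replace (Phi2 y - Phi2 tm + / b * RInt F tm y - (- Phi2 tm + / b * (RInt F tm y + RInt F y tn)))
    with (Phi2 y - / b * RInt F y tn) by ring.
  assert (T1 : Rabs (Phi2 y) < eps / 2).
  { assert (Hp := Rpower_pos (tn - y) b).
    assert (HA : Rabs (Phi2 y) = Rabs (u1 y) * Rpower (tn - y) b * / b).
    { unfold Phi2. replace (- u1 y * Rpower (tn - y) b / b) with (- (u1 y) * (Rpower (tn - y) b * / b)) by (unfold Rdiv; ring).
      rewrite Rabs_mult, Rabs_Ropp, (Rabs_right (_ * _)). ring.
      apply Rle_ge, Rlt_le, Rmult_lt_0_compat; auto. apply Rinv_0_lt_compat; auto. }
    rewrite HA.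
    assert (Hr := Hsm (tn - y) ltac:(lra)).
    assert (Hu1 := HM1 y ltac:(lra)).
    apply Rmult_lt_reg_r with b; auto. rewrite Rmult_assoc, Rinv_l, Rmult_1_r by lra.
    apply Rle_lt_trans with ((M1 + 1) * Rpower (tn - y) b).
    apply Rmult_le_compat_r; lra.
    apply Rmult_lt_reg_r with (/ (M1 + 1)). apply Rinv_0_lt_compat; lra.
    replace ((M1 + 1) * Rpower (tn - y) b * / (M1 + 1)) with (Rpower (tn - y) b) by (field; lra).
    replace (eps / 2 * b * / (M1 + 1)) with (eps * b / (2 * (M1 + 1))) by (field; lra). auto. }
  assert (T2 : Rabs (/ b * RInt F y tn) < eps / 2).
  { rewrite Rabs_mult, Rabs_right by (apply Rle_ge, Rlt_le, Rinv_0_lt_compat; auto).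
    assert (Hi := RIntR_abs_le F y tn MF ltac:(lra) ltac:(apply F_ex; lra) ltac:(intros; apply HMF; lra)).
    apply Rmult_lt_reg_l with b; auto. rewrite <- Rmult_assoc, Rinv_r, Rmult_1_l by lra.
    apply Rle_lt_trans with ((tn - y) * MF); auto.
    apply Rle_lt_trans with ((tn - y) * (MF + 1)). apply Rmult_le_compat_l; lra.
    apply Rmult_lt_reg_r with (/ (MF + 1)). apply Rinv_0_lt_compat; lra.
    replace ((tn - y) * (MF + 1) * / (MF + 1)) with (tn - y) by (field; lra).
    replace (b * (eps / 2) * / (MF + 1)) with d2 by (unfold d2; field; lra). auto. }
  pose proof (Rabs_triang (Phi2 y) (- (/ b * RInt F y tn))).
  rewrite Rabs_Ropp in H. unfold Rminus. lra.
Qed.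

Lemma int_lin : RInt (fun t => (tn - t) * u2 t) tm tn = u tn - h * u1 tm - u tm.
Proof.
  pose proof tm_ge0 as H0. pose proof tn_eq as E.
  rewrite (isR_derive (fun t => (tn - t) * u1 t + u t)).
  - cbv beta. replace (tn - tn) with 0 by ring. replace (tn - tm) with h by lra. req; ring.
  - intros t Ht. rewrite Rmin_left, Rmax_right in Ht by lra.
    eapply is_derive_eq.
    apply (is_derive_plus (fun t => (tn - t) * u1 t) u).
    apply (is_derive_mult (fun t => tn - t) u1).
    auto_derive; auto. apply D2; lra. intros; apply Rmult_comm. apply D1; lra.
    change ((-1) * u1 t + (tn - t) * u2 t + u1 t = (tn - t) * u2 t). ring.
  - intros t Ht. rewrite Rmin_left, Rmax_right in Ht by lra.
    apply cR_mult. apply cR_minus. apply cR_const. apply cR_id. apply C2; lra.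
Qed.

Lemma int_q : RInt (fun t => qp b (tn - t)) tm tn = Rpower h (2 - a) / (2 - a).
Proof.
  pose proof tm_ge0 as H0. pose proof tn_eq as E.
  rewrite (isR_derive (fun t => - qp (2 - a) (tn - t) / (2 - a))).
  - cbv beta. rewrite (qp_npos _ (tn - tn)) by lra. replace (tn - tm) with h by lra. rewrite qp_pos by lra.
    req; field. lra.
  - intros t Ht.
    eapply is_derive_eq.
    apply (is_derive_ext (fun t => (- / (2 - a)) * qp (2 - a) (tn - t))). intros z; simpl; unfold Rdiv; ring.
    apply (is_derive_scal (fun t => qp (2 - a) (tn - t))).
    apply (is_derive_comp (qp (2 - a)) (fun t => tn - t)).
    apply qp_deriv; lra. auto_derive; auto. 
    change (- / (2 - a) * ((-1) * ((2 - a) * qp (2 - a - 1) (tn - t))) = qp b (tn - t)).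
    replace (2 - a - 1) with b by (unfold b; ring). field. lra.
  - intros t Ht. apply (continuous_comp (fun t => tn - t) (qp b)).
    apply cR_minus. apply cR_const. apply cR_id. apply qp_cont. unfold b; lra.
Qed.

Lemma int_sig : RInt (fun t => tn - t) tm tn = h * h / 2.
Proof.
  pose proof tn_eq as E.
  rewrite (isR_derive (fun t => - ((tn - t) * (tn - t)) / 2)).
  - cbv beta. replace (tn - tm) with h by lra. req; field.
  - intros t Ht. auto_derive; auto. field.
  - intros t Ht. apply cR_minus. apply cR_const. apply cR_id.
Qed.

Lemma local_bound : Rabs (b * Lval - (u tn - u tm) / h * Rpower h b)
  <= Mpp * (Rpower h (2 - a) / (2 - a) - Rpower h (2 - a) / 2).
Proof.
  pose proof tm_ge0 as H0. pose proof tn_eq as E.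
  assert (Hb : 0 < b) by (unfold b; lra).
  set (c := Rpower h b / h).
  set (w := fun t => qp b (tn - t) - c * (tn - t)).
  assert (Hc : c = Rpower h (- a)).
  { unfold c, b. unfold Rminus. rewrite Rpower_plus, Rpower_1 by lra. field. lra. }
  assert (Hw : forall t, tm <= t <= tn -> 0 <= w t).
  { intros t Ht. unfold w. destruct (Req_dec t tn) as [->|Hne].
    rewrite qp_npos by lra. replace (tn - tn) with 0 by ring. lra.
    rewrite qp_pos by lra. rewrite Hc.
    replace (Rpower (tn - t) b) with ((tn - t) * Rpower (tn - t) (- a)).
    assert (Rpower h (- a) <= Rpower (tn - t) (- a)).
    { rewrite !Rpower_Ropp. apply Rinv_le_contravar. apply Rpower_pos.
      apply Rle_Rpower_l; lra. }
    assert (0 <= tn - t) by lra. nra.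
    unfold b. unfold Rminus. rewrite Rplus_comm, Rpower_plus, Rpower_1 by lra. ring. }
  assert (Hwc : forall t, tm <= t <= tn -> continuous w t).
  { intros t Ht. unfold w. apply cR_minus.
    apply (continuous_comp (fun t => tn - t) (qp b)).
    apply cR_minus. apply cR_const. apply cR_id. apply qp_cont. auto.
    apply cR_mult. apply cR_const. apply cR_minus. apply cR_const. apply cR_id. }
  assert (Hex_w : ex_RInt w tm tn).
  { apply exR_cont; intros z Hz; rewrite Rmin_left, Rmax_right in Hz by lra; apply Hwc; lra. }
  assert (Hex_q : ex_RInt (fun t => qp b (tn - t)) tm tn).
  { apply exR_cont; intros z Hz; rewrite Rmin_left, Rmax_right in Hz by lra.
    apply (continuous_comp (fun t => tn - t) (qp b)).
    apply cR_minus. apply cR_const. apply cR_id. apply qp_cont. auto. }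
  assert (Hex_s : ex_RInt (fun t => tn - t) tm tn).
  { apply exR_cont; intros z Hz. apply cR_minus. apply cR_const. apply cR_id. }
  assert (Hex_l : ex_RInt (fun t => (tn - t) * u2 t) tm tn).
  { apply exR_cont; intros z Hz; rewrite Rmin_left, Rmax_right in Hz by lra.
    apply cR_mult. apply cR_minus. apply cR_const. apply cR_id. apply C2; lra. }
  assert (HF : ex_RInt F tm tn) by (apply F_ex; lra).
  assert (Key : b * Lval - (u tn - u tm) / h * Rpower h b = RInt (fun t => u2 t * w t) tm tn).
  { unfold Lval, Phi2. replace (tn - tm) with h by lra.
    unfold w.
    rewrite (RIntR_ext (fun t => u2 t * (qp b (tn - t) - c * (tn - t))) (fun t => F t - c * ((tn - t) * u2 t))) by (intros; unfold F; ring).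
    rewrite RIntR_minus, RIntR_scal, int_lin; auto. 2: apply exR_scal; auto.
    unfold c. field. split; lra. }
  rewrite Key.
  assert (Hex_uw : ex_RInt (fun t => u2 t * w t) tm tn).
  { apply exR_cont; intros z Hz; rewrite Rmin_left, Rmax_right in Hz by lra.
    apply cR_mult. apply C2; lra. apply Hwc; lra. }
  eapply Rle_trans. apply abs_RInt_le; auto. lra.
  apply Rle_trans with (RInt (fun t => Mpp * w t) tm tn).
  - apply RInt_le; auto. lra.
    apply exR_cont; intros z Hz; rewrite Rmin_left, Rmax_right in Hz by lra.
    apply cR_abs. apply cR_mult. apply C2; lra. apply Hwc; lra.
    apply exR_scal; auto.
    intros t Ht. rewrite Rabs_mult, (Rabs_right (w t)) by (apply Rle_ge, Hw; lra).
    apply Rmult_le_compat_r. apply Hw; lra. apply Mpp_ge. lra.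
  - rewrite RIntR_scal by auto. apply Req_le. f_equal.
    unfold w. rewrite RIntR_minus, RIntR_scal; auto. rewrite int_q. replace (RInt (Rminus tn) tm tn) with (h * h / 2) by (rewrite <- int_sig; reflexivity). 2: apply exR_scal; auto.
    unfold c. replace (2 - a) with (b + 1) by (unfold b; ring).
    rewrite Rpower_plus, Rpower_1 by lra. req; field. lra.
Qed.
End Main.

Definition LvalD a h m u := - (- Derive u (tk h m) * Rpower (tk h (S m) - tk h m) (1 - a) / (1 - a))
  + / (1 - a) * RInt (fun tau => Derive_n u 2 tau * qp (1 - a) (tk h (S m) - tau)) (tk h m) (tk h (S m)).

Lemma local_lim' a h m u : 0 < a < 1 -> 0 < h ->
  (forall t, 0 <= t <= tk h (S m) -> ex_derive u t /\ ex_derive (Derive u) t /\ continuous (Derive_n u 2) t) ->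
  forall eps, 0 < eps -> exists d, 0 < d <= h /\
  forall y, tk h (S m) - d < y < tk h (S m) ->
    Rabs (RInt (fun tau => Derive u tau / Rpower (tk h (S m) - tau) a) (tk h m) y - LvalD a h m u) < eps.
Proof. intros Ha Hh Hu eps He. exact (local_lim a h m u Ha Hh Hu eps He). Qed.

Lemma local_bound' a h m u : 0 < a < 1 -> 0 < h ->
  (forall t, 0 <= t <= tk h (S m) -> ex_derive u t /\ ex_derive (Derive u) t /\ continuous (Derive_n u 2) t) ->
  Rabs ((1 - a) * LvalD a h m u - (u (tk h (S m)) - u (tk h m)) / h * Rpower h (1 - a))
  <= max_abs (Derive_n u 2) 0 (tk h (S m)) * (Rpower h (2 - a) / (2 - a) - Rpower h (2 - a) / 2).
Proof. intros Ha Hh Hu. exact (local_bound a h m u Ha Hh Hu). Qed.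


Lemma fold_plus_shift (l : list R) x : fold_right Rplus x l = fold_right Rplus 0 l + x.
Proof. induction l; simpl; [ring|rewrite IHl; ring]. Qed.

Lemma sumk_0 F : sumk 1 0 F = 0.
Proof. reflexivity. Qed.

Lemma sumk_S k F : sumk 1 (S k) F = sumk 1 k F + F (S k).
Proof.
  unfold sumk. replace (S (S k) - 1)%nat with (S k) by lia. replace (S k - 1)%nat with k by lia.
  rewrite seq_S, map_app, fold_right_app. simpl. rewrite fold_plus_shift. ring.
Qed.

Lemma sumk_ext k F G : (forall l, (1 <= l <= k)%nat -> F l = G l) -> sumk 1 k F = sumk 1 k G.
Proof. induction k; intros H. reflexivity. rewrite !sumk_S, IHk, (H (S k)); auto; intros; try apply H; lia. Qed.

Lemma sumk_plus k F G : sumk 1 k (fun l => F l + G l) = sumk 1 k F + sumk 1 k G.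
Proof. induction k. rewrite !sumk_0. ring. rewrite !sumk_S, IHk. ring. Qed.
Lemma sumk_minus k F G : sumk 1 k (fun l => F l - G l) = sumk 1 k F - sumk 1 k G.
Proof. induction k. rewrite !sumk_0. ring. rewrite !sumk_S, IHk. ring. Qed.
Lemma sumk_scal k c F : sumk 1 k (fun l => c * F l) = c * sumk 1 k F.
Proof. induction k. rewrite !sumk_0. ring. rewrite !sumk_S, IHk. ring. Qed.
Lemma sumk_const k c : sumk 1 k (fun _ => c) = INR k * c.
Proof. induction k. rewrite !sumk_0. simpl. ring. rewrite !sumk_S, IHk, S_INR. ring. Qed.
Lemma sumk_le k F G : (forall l, (1 <= l <= k)%nat -> F l <= G l) -> sumk 1 k F <= sumk 1 k G.
Proof. induction k; intros H. rewrite !sumk_0; lra. rewrite !sumk_S. apply Rplus_le_compat. apply IHk; intros; apply H; lia. apply H; lia. Qed.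
Lemma sumk_abs k F : Rabs (sumk 1 k F) <= sumk 1 k (fun l => Rabs (F l)).
Proof. induction k. rewrite !sumk_0, Rabs_R0; lra. rewrite !sumk_S.
  eapply Rle_trans. apply Rabs_triang. lra. Qed.
Lemma sumk_tele k (G : nat -> R) : sumk 1 k (fun l => G l - G (l - 1)%nat) = G k - G 0%nat.
Proof. induction k. rewrite !sumk_0. ring. rewrite sumk_S, IHk. replace (S k - 1)%nat with k by lia. ring. Qed.
Lemma sumk_swap k N (F : nat -> nat -> R) :
  sumk 1 N (fun i => sumk 1 k (fun l => F i l)) = sumk 1 k (fun l => sumk 1 N (fun i => F i l)).
Proof. induction N. rewrite sumk_0. rewrite (sumk_ext k _ (fun _ => 0)) by (intros; apply sumk_0).
  rewrite sumk_const; ring.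
  rewrite sumk_S, IHN. rewrite <- sumk_plus. apply sumk_ext. intros l _. rewrite sumk_S. reflexivity. Qed.
Lemma sumk_RInt N (f : nat -> R -> R) x y :
  (forall i, (1 <= i <= N)%nat -> ex_RInt (f i) x y) ->
  ex_RInt (fun t => sumk 1 N (fun i => f i t)) x y /\
  sumk 1 N (fun i => RInt (f i) x y) = RInt (fun t => sumk 1 N (fun i => f i t)) x y.
Proof.
  induction N; intros H.
  - split. apply (ex_RInt_ext (fun _ => 0)). intros; rewrite sumk_0; auto. apply ex_RInt_const.
    rewrite sumk_0, (RIntR_ext _ (fun _ => 0)) by (intros; apply sumk_0). rewrite RIntR_const. ring.
  - destruct IHN as [H1 H2]. intros; apply H; lia.
    assert (E : forall t, sumk 1 (S N) (fun i => f i t) = sumk 1 N (fun i => f i t) + f (S N) t).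
    { intros; apply sumk_S. }
    split.
    + apply (exR_ext (fun t => sumk 1 N (fun i => f i t) + f (S N) t)). intros; now rewrite E.
      apply exR_plus; auto. apply H; lia.
    + rewrite sumk_S, H2. rewrite (RIntR_ext (fun t => sumk 1 (S N) (fun i => f i t)) (fun t => sumk 1 N (fun i => f i t) + f (S N) t)) by (intros; apply E).
      rewrite RIntR_plus; auto. apply H; lia.
Qed.

Lemma Rpower_add1 x p : 0 < x -> Rpower x (p + 1) = Rpower x p * x.
Proof. intros H. rewrite Rpower_plus, Rpower_1; auto. Qed.

Section K.
Variable a : R.
Hypothesis Ha : 0 < a < 1.

Lemma K_tele x d : 0 < d < x -> d * Rpower x (-1 - a) <= (Rpower (x - d) (- a) - Rpower x (- a)) / a.
Proof.
  intros Hd.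
  destruct (MVT_cor2 (fun y => Rpower y (- a)) (fun y => - a * Rpower y (- a - 1)) (x - d) x) as [z [Ez Hz]].
  lra. intros c Hc. apply derivable_pt_lim_power. lra.
  replace (x - (x - d)) with d in Ez by ring.
  assert (Rpower x (-1 - a) <= Rpower z (- a - 1)).
  { replace (-1 - a) with (- (1 + a)) by ring. replace (- a - 1) with (- (1 + a)) by ring.
    rewrite !Rpower_Ropp. apply Rinv_le_contravar. apply Rpower_pos. apply Rle_Rpower_l; lra. }
  replace (Rpower (x - d) (- a) - Rpower x (- a)) with (a * (d * Rpower z (- a - 1))) by nra.
  replace (a * (d * Rpower z (- a - 1)) / a) with (d * Rpower z (- a - 1)) by (field; lra).
  apply Rmult_le_compat_l; lra.
Qed.

Let K c := fun t => Rpower (c - t) (-1 - a).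

Lemma K_cont c t : t < c -> continuous (K c) t.
Proof. intros; apply continuous_Rpower_shift; auto. Qed.

Lemma chord_int c p q : p < q -> q < c ->
  RInt (fun t => (t - p) * (q - t) * K c t) p q <= (q - p) ^ 3 / 12 * (K c p + K c q).
Proof.
  intros Hpq Hqc.
  assert (Hch := chord (K c) (fun t => (1 + a) * Rpower (c - t) (-2 - a))
     (fun t => (1 + a) * ((2 + a) * Rpower (c - t) (-3 - a))) p q Hpq).
  assert (Hch' : forall t, p <= t <= q -> (q - p) * K c t <= (q - t) * K c p + (t - p) * K c q).
  { apply Hch.
    - intros t Ht. unfold K. eapply is_derive_eq3. apply is_derive_Rpower_shift. lra.
      replace (-1 - a - 1) with (-2 - a) by ring. req; ring.
    - intros t Ht. eapply is_derive_eq3.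
      apply (is_derive_scal (fun t => Rpower (c - t) (-2 - a))). apply is_derive_Rpower_shift. lra.
      change ((1 + a) * (- (-2 - a) * Rpower (c - t) (-2 - a - 1)) = (1 + a) * ((2 + a) * Rpower (c - t) (-3 - a))).
      replace (-2 - a - 1) with (-3 - a) by ring. ring.
    - intros t Ht. apply Rmult_le_pos. lra. apply Rmult_le_pos. lra. apply Rlt_le, Rpower_pos. }
  set (A := K c p). set (B := K c q). set (L := q - p).
  assert (HL : 0 < L) by (unfold L; lra).
  assert (Hcont : forall t, p <= t <= q -> continuous (K c) t) by (intros; apply K_cont; lra).
  apply Rle_trans with (RInt (fun t => (t - p) * (q - t) * (((q - t) * A + (t - p) * B) / L)) p q).
  - apply RInt_le. lra.
    apply exR_cont. intros z Hz. rewrite Rmin_left, Rmax_right in Hz by lra.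
    apply cR_mult. apply cR_mult; apply cR_minus; try apply cR_id; apply cR_const. apply Hcont; lra.
    apply exR_cont. intros z Hz. apply cR_mult. apply cR_mult; apply cR_minus; try apply cR_id; apply cR_const.
    apply cR_mult. apply cR_plus; apply cR_mult; try apply cR_const; apply cR_minus; try apply cR_id; apply cR_const.
    apply cR_const.
    intros t Ht. apply Rmult_le_compat_l. apply Rmult_le_pos; lra.
    apply Rmult_le_reg_r with L; auto. unfold Rdiv. rewrite Rmult_assoc, Rinv_l, Rmult_1_r by lra.
    rewrite Rmult_comm. apply Hch'. lra.
  - apply Req_le.
    rewrite (isR_derive (fun t => A / L * (L * L * ((t - p) ^ 2) / 2 - 2 * L * ((t - p) ^ 3) / 3 + (t - p) ^ 4 / 4)
                                 + B / L * (L * ((t - p) ^ 3) / 3 - (t - p) ^ 4 / 4))).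
    + cbv beta. replace (q - p) with L by reflexivity. replace (p - p) with 0 by ring. req. field. lra.
    + intros t Ht. auto_derive. auto. unfold L. field. lra.
    + intros t Ht. apply cR_mult. apply cR_mult; apply cR_minus; try apply cR_id; apply cR_const.
      apply cR_mult. apply cR_plus; apply cR_mult; try apply cR_const; apply cR_minus; try apply cR_id; apply cR_const.
      apply cR_const.
Qed.

Definition J1 := - (4 * Rpower 2 (- a) - 1) / (2 - a) + 3 * (2 * Rpower 2 (- a) - 1) / (1 - a)
                 - 2 * (1 - Rpower 2 (- a)) / a.

Lemma J1_int c d : 0 < d ->
  RInt (fun t => (t - (c - 2 * d)) * ((c - d) - t) * K c t) (c - 2 * d) (c - d) = Rpower d (2 - a) * J1.
Proof.
  intros Hd.
  set (Phi := fun t => Rpower (c - t) (2 - a) / (2 - a) - 3 * d * Rpower (c - t) (1 - a) / (1 - a)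
                        - 2 * d * d * Rpower (c - t) (- a) / a).
  rewrite (isR_derive Phi).
  - unfold Phi. replace (c - (c - d)) with d by ring. replace (c - (c - 2 * d)) with (2 * d) by ring.
    rewrite <- !Rpower_mult_distr by lra.
    replace (2 - a) with ((- a) + 1 + 1) by ring. replace (1 - a) with ((- a) + 1) by ring.
    rewrite !Rpower_add1 by lra. unfold J1. req; field. lra.
  - intros t Ht. rewrite Rmin_left, Rmax_right in Ht by lra.
    assert (Hs : 0 < c - t) by lra.
    unfold Phi.
    eapply is_derive_eq3.
    + apply (is_derive_minus (fun t => Rpower (c - t) (2 - a) / (2 - a) - 3 * d * Rpower (c - t) (1 - a) / (1 - a))
                            (fun t => 2 * d * d * Rpower (c - t) (- a) / a) t
                            (minus (- Rpower (c - t) (1 - a)) (- (3 * d * Rpower (c - t) (- a))))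
                            (2 * d * d * Rpower (c - t) (-1 - a))).
      apply (is_derive_minus (fun t => Rpower (c - t) (2 - a) / (2 - a)) (fun t => 3 * d * Rpower (c - t) (1 - a) / (1 - a)) t
               (- Rpower (c - t) (1 - a)) (- (3 * d * Rpower (c - t) (- a)))).
      * apply (is_derive_ext (fun t => / (2 - a) * Rpower (c - t) (2 - a))). intros; simpl; unfold Rdiv; apply Rmult_comm.
        eapply is_derive_eq3. apply (is_derive_scal (fun t => Rpower (c - t) (2 - a))). apply is_derive_Rpower_shift; lra.
        change (/ (2 - a) * (- (2 - a) * Rpower (c - t) (2 - a - 1)) = - Rpower (c - t) (1 - a)).
        replace (2 - a - 1) with (1 - a) by ring. field. lra.
      * apply (is_derive_ext (fun t => 3 * d / (1 - a) * Rpower (c - t) (1 - a))). intros; simpl; unfold Rdiv; ring.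
        eapply is_derive_eq3. apply (is_derive_scal (fun t => Rpower (c - t) (1 - a))). apply is_derive_Rpower_shift; lra.
        change (3 * d / (1 - a) * (- (1 - a) * Rpower (c - t) (1 - a - 1)) = - (3 * d * Rpower (c - t) (- a))).
        replace (1 - a - 1) with (- a) by ring. field. lra.
      * apply (is_derive_ext (fun t => 2 * d * d / a * Rpower (c - t) (- a))). intros; simpl; unfold Rdiv; ring.
        eapply is_derive_eq3. apply (is_derive_scal (fun t => Rpower (c - t) (- a))). apply is_derive_Rpower_shift; lra.
        change (2 * d * d / a * (- - a * Rpower (c - t) (- a - 1)) = 2 * d * d * Rpower (c - t) (-1 - a)).
        replace (- a - 1) with (-1 - a) by ring. field. lra.
    + change ((- Rpower (c - t) (1 - a) - - (3 * d * Rpower (c - t) (- a))) - (2 * d * d * Rpower (c - t) (-1 - a)) =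
        (t - (c - 2 * d)) * (c - d - t) * K c t).
      unfold K. replace (1 - a) with ((-1 - a) + 1 + 1) by ring. replace (- a) with ((-1 - a) + 1) at 1 by ring.
      rewrite !Rpower_add1 by lra. ring.
  - intros t Ht. rewrite Rmin_left, Rmax_right in Ht by lra.
    apply cR_mult. apply cR_mult; apply cR_minus; try apply cR_id; apply cR_const. apply K_cont; lra.
Qed.

Lemma J1_nonneg : 0 <= J1.
Proof.
  assert (H := J1_int 2 1 ltac:(lra)). rewrite Rpower_base1, Rmult_1_l in H. rewrite <- H.
  apply RInt_ge_0. lra.
  apply exR_cont. intros z Hz. rewrite Rmin_left, Rmax_right in Hz by lra.
  apply cR_mult. apply cR_mult; apply cR_minus; try apply cR_id; apply cR_const. apply K_cont; lra.
  intros t Ht. apply Rmult_le_pos. apply Rmult_le_pos; lra. apply Rlt_le, Rpower_pos.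
Qed.

End K.

Lemma sumk_scal_r k c F : sumk 1 k (fun l => F l * c) = sumk 1 k F * c.
Proof. induction k. rewrite !sumk_0. ring. rewrite !sumk_S, IHk. ring. Qed.

Section Hist.
Variables (a h : R) (m : nat) (u : R -> R) (Nexp : nat) (s om : nat -> R) (eps : R).
Hypothesis Ha : 0 < a < 1.
Hypothesis Hh : 0 < h.
Let tn := tk h (S m).
Let tm := tk h m.
Hypothesis Hu : forall t, 0 <= t <= tn ->
     ex_derive u t /\ ex_derive (Derive u) t /\ continuous (Derive_n u 2) t.
Let Ss := fun sig => sumk 1 Nexp (fun i => om i * exp (- s i * sig)).
Hypothesis Hsoe : forall sig, h <= sig <= tn -> Rabs (Rpower sig (-1 - a) - Ss sig) <= eps.
Let uk := fun k => u (tk h k).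
Let Mu := max_abs u 0 tm.
Let Mpp := max_abs (Derive_n u 2) 0 tn.
Let K := fun tau => Rpower (tn - tau) (-1 - a).
Let g := fun tau => Derive u tau / Rpower (tn - tau) a.

Lemma tk_S j : tk h (S j) = tk h j + h.
Proof. unfold tk. rewrite S_INR. ring. Qed.
Lemma tk_ge0 j : 0 <= tk h j.
Proof. unfold tk. apply Rmult_le_pos. apply pos_INR. lra. Qed.
Lemma tk_le i j : (i <= j)%nat -> tk h i <= tk h j.
Proof. intros H. unfold tk. apply Rmult_le_compat_r. lra. apply le_INR; auto. Qed.
Lemma tnm : tn = tm + h.
Proof. apply tk_S. Qed.

Lemma Cu t : 0 <= t <= tn -> continuous u t.
Proof. intros H. apply (@ex_derive_continuous R_AbsRing R_NormedModule). apply Hu; auto. Qed.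
Lemma Cu1 t : 0 <= t <= tn -> continuous (Derive u) t.
Proof. intros H. apply (@ex_derive_continuous R_AbsRing R_NormedModule). apply Hu; auto. Qed.

Lemma uK_cont t : 0 <= t <= tm -> continuous (fun t => u t * K t) t.
Proof. intros H. pose proof tnm. apply cR_mult. apply Cu; lra. apply continuous_Rpower_shift. lra. Qed.
Lemma uK_ex x y : 0 <= x <= y -> y <= tm -> ex_RInt (fun t => u t * K t) x y.
Proof. intros H1 H2. apply exR_cont. intros z Hz. rewrite Rmin_left, Rmax_right in Hz by lra.
  apply uK_cont. lra. Qed.

Lemma hist_parts : RInt g 0 tm = u tm * Rpower h (- a) - u 0 * Rpower tn (- a) - a * RInt (fun t => u t * K t) 0 tm.
Proof.
  pose proof tnm as E. pose proof (tk_ge0 m) as H0. fold tm in H0.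
  assert (Hd : forall t, Rmin 0 tm <= t <= Rmax 0 tm ->
     is_derive (fun t => u t * Rpower (tn - t) (- a)) t (g t + a * (u t * K t))).
  { intros t Ht. rewrite Rmin_left, Rmax_right in Ht by lra.
    eapply is_derive_eq3. apply (is_derive_mult u (fun t => Rpower (tn - t) (- a))).
    apply Derive_correct. apply Hu. lra. apply is_derive_Rpower_shift. lra. intros; apply Rmult_comm.
    change (Derive u t * Rpower (tn - t) (- a) + u t * (- - a * Rpower (tn - t) (- a - 1)) = g t + a * (u t * K t)).
    unfold g, K, Rdiv. rewrite <- Rpower_Ropp. replace (- a - 1) with (-1 - a) by ring. ring. }
  assert (Hc : forall t, Rmin 0 tm <= t <= Rmax 0 tm -> continuous (fun t => g t + a * (u t * K t)) t).
  { intros t Ht. rewrite Rmin_left, Rmax_right in Ht by lra.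
    apply cR_plus. apply (g_cont a h m u Hu). fold tn; lra. apply cR_mult. apply cR_const. apply uK_cont; lra. }
  assert (Hex : ex_RInt (fun t => g t + a * (u t * K t)) 0 tm) by (eapply exR_derive; eauto).
  assert (Hg : ex_RInt g 0 tm) by (apply (g_ex a h m u Hu); fold tn; lra).
  assert (Hk : ex_RInt (fun t => a * (u t * K t)) 0 tm) by (apply exR_scal, uK_ex; lra).
  assert (H := isR_derive _ _ 0 tm Hd Hc).
  rewrite RIntR_plus in H by auto. rewrite RIntR_scal in H by (apply uK_ex; lra).
  cbv beta in H. replace (tn - tm) with h in H by lra. replace (tn - 0) with tn in H by ring.
  lra.
Qed.

Lemma int_split j : (j <= m)%nat ->
  RInt (fun t => u t * K t) 0 (tk h j) = sumk 1 j (fun l => RInt (fun t => u t * K t) (tk h (l - 1)) (tk h l)).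
Proof.
  induction j; intros Hj.
  - rewrite sumk_0. unfold tk. rewrite Rmult_0_l. apply RIntR_point.
  - rewrite sumk_S, <- IHj by lia. replace (S j - 1)%nat with j by lia.
    assert (tk h (S j) <= tm) by (apply tk_le; lia). pose proof (tk_S j). pose proof (tk_ge0 j).
    apply eq_sym, RIntR_Chasles; apply uK_ex; lra.
Qed.


Let Pi := fun l tau => Pi1 h uk l tau.

Lemma Pi_cont l t : continuous (Pi l) t.
Proof. unfold Pi, Pi1. apply cR_plus; unfold Rdiv; apply cR_mult; try apply cR_const;
  apply cR_mult; try apply cR_const; apply cR_minus; try apply cR_id; apply cR_const. Qed.

Lemma W_eq : sumk 1 Nexp (fun i => om i * Ui h (s i) uk (S m)) =
  sumk 1 m (fun l => RInt (fun t => Ss (tn - t) * Pi l t) (tk h (l - 1)) (tk h l)).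
Proof.
  unfold Ui. replace (S m - 1)%nat with m by lia.
  rewrite (sumk_ext Nexp _ (fun i => sumk 1 m (fun l => om i * RInt (fun tau => exp (- s i * (tk h (S m) - tau)) * Pi1 h uk l tau) (tk h (l - 1)) (tk h l)))).
  2: { intros i _. rewrite <- sumk_scal. reflexivity. }
  rewrite sumk_swap. apply sumk_ext. intros l Hl.
  assert (Hex : forall i, (1 <= i <= Nexp)%nat -> ex_RInt (fun t => om i * (exp (- s i * (tn - t)) * Pi l t)) (tk h (l - 1)) (tk h l)).
  { intros i _. apply exR_cont. intros z _. apply cR_mult. apply cR_const. apply cR_mult.
    apply cR_exp. apply cR_mult. apply cR_const. apply cR_minus. apply cR_const. apply cR_id. apply Pi_cont. }
  destruct (sumk_RInt Nexp (fun i t => om i * (exp (- s i * (tn - t)) * Pi l t)) _ _ Hex) as [_ E].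
  rewrite (sumk_ext Nexp _ (fun i => RInt (fun t => om i * (exp (- s i * (tn - t)) * Pi l t)) (tk h (l - 1)) (tk h l))).
  2: { intros i _. rewrite RIntR_scal. reflexivity. apply exR_cont. intros z _. apply cR_mult.
    apply cR_exp. apply cR_mult. apply cR_const. apply cR_minus. apply cR_const. apply cR_id. apply Pi_cont. }
  rewrite E. apply RIntR_ext. intros t _. unfold Ss. rewrite <- sumk_scal_r. apply sumk_ext. intros; ring.
Qed.

Lemma Mu_ge t : 0 <= t <= tm -> Rabs (u t) <= Mu.
Proof. intros H. apply max_abs_cont; auto. lra. intros; apply Cu. pose proof tnm; lra. Qed.

Let Mpp_ge := Mpp_ge h m u Hh Hu.

Lemma interval_bound l : (1 <= l <= m)%nat ->
  Rabs (RInt (fun t => u t * K t) (tk h (l - 1)) (tk h l) - RInt (fun t => Ss (tn - t) * Pi l t) (tk h (l - 1)) (tk h l))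
  <= Mpp / 2 * RInt (fun t => (t - tk h (l - 1)) * (tk h l - t) * K t) (tk h (l - 1)) (tk h l) + h * (eps * Mu).
Proof.
  intros Hl. set (p := tk h (l - 1)). set (q := tk h l).
  assert (Hq : q = p + h) by (unfold p, q; replace l with (S (l - 1)) at 1 by lia; apply tk_S).
  assert (Hp0 : 0 <= p) by apply tk_ge0.
  assert (Hqm : q <= tm) by (apply tk_le; lia).
  pose proof tnm as E.
  assert (HKc : forall t, p <= t <= q -> continuous K t) by (intros; apply continuous_Rpower_shift; lra).
  assert (Hex1 : ex_RInt (fun t => u t * K t) p q) by (apply uK_ex; lra).
  assert (HSc : forall t, continuous (fun t => Ss (tn - t)) t).
  { intros t. unfold Ss. clear. induction Nexp.
    - apply (continuous_ext_loc _ (fun _ => 0)). apply filter_forall. intros; now rewrite sumk_0. apply cR_const.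
    - apply (continuous_ext_loc _ (fun t => sumk 1 n (fun i => om i * exp (- s i * (tn - t))) + om (S n) * exp (- s (S n) * (tn - t)))).
      apply filter_forall. intros; now rewrite sumk_S. apply cR_plus. auto. apply cR_mult. apply cR_const.
      apply cR_exp. apply cR_mult. apply cR_const. apply cR_minus. apply cR_const. apply cR_id. }
  assert (Hex2 : ex_RInt (fun t => Ss (tn - t) * Pi l t) p q).
  { apply exR_cont. intros z _. apply cR_mult. apply HSc. apply Pi_cont. }
  assert (Hex3 : ex_RInt (fun t => (u t - Pi l t) * K t) p q).
  { apply exR_cont. intros z Hz. rewrite Rmin_left, Rmax_right in Hz by lra. apply cR_mult. apply cR_minus.
    apply Cu; lra. apply Pi_cont. apply HKc; lra. }
  assert (Hex4 : ex_RInt (fun t => Pi l t * (K t - Ss (tn - t))) p q).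
  { apply exR_cont. intros z Hz. rewrite Rmin_left, Rmax_right in Hz by lra. apply cR_mult. apply Pi_cont.
    apply cR_minus. apply HKc; lra. apply HSc. }
  rewrite <- RIntR_minus by auto.
  rewrite (RIntR_ext _ (fun t => (u t - Pi l t) * K t + Pi l t * (K t - Ss (tn - t)))) by (intros; ring).
  rewrite RIntR_plus by auto.
  eapply Rle_trans. apply Rabs_triang. apply Rplus_le_compat.
  - eapply Rle_trans. apply abs_RInt_le; auto. lra.
    rewrite <- RIntR_scal.
    2: { apply exR_cont. intros z Hz. rewrite Rmin_left, Rmax_right in Hz by lra. apply cR_mult. apply cR_mult;
         apply cR_minus; try apply cR_id; apply cR_const. apply HKc; lra. }
    apply RInt_le. lra.
    apply exR_cont. intros z Hz. rewrite Rmin_left, Rmax_right in Hz by lra. apply cR_abs. apply cR_mult. apply cR_minus.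
    apply Cu; lra. apply Pi_cont. apply HKc; lra.
    apply exR_scal. apply exR_cont. intros z Hz. rewrite Rmin_left, Rmax_right in Hz by lra. apply cR_mult. apply cR_mult;
         apply cR_minus; try apply cR_id; apply cR_const. apply HKc; lra.
    intros t Ht. rewrite Rabs_mult, (Rabs_right (K t)) by (apply Rle_ge, Rlt_le, Rpower_pos).
    rewrite <- Rmult_assoc. apply Rmult_le_compat_r. apply Rlt_le, Rpower_pos.
    assert (HI := interp_err u (Derive u) (Derive_n u 2) p q Mpp ltac:(lra)).
    refine (_ (HI _ _ _ t ltac:(lra))).
    + intros H. replace (q - p) with h in H by lra.
      assert (Hpi : Pi l t = ((q - t) * u p + (t - p) * u q) / h).
      { unfold Pi, Pi1, uk. fold p q. field. lra. }
      rewrite Hpi. replace (u t - ((q - t) * u p + (t - p) * u q) / h) with ((h * u t - ((q - t) * u p + (t - p) * u q)) / h) by (field; lra).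
      unfold Rdiv at 1. rewrite Rabs_mult, (Rabs_right (/ h)) by (apply Rle_ge, Rlt_le, Rinv_0_lt_compat; lra).
      apply Rmult_le_reg_r with h. lra. rewrite Rmult_assoc, Rinv_l, Rmult_1_r by lra. lra.
    + intros x Hx. apply Derive_correct. apply Hu. lra.
    + intros x Hx. apply Derive_correct. apply Hu. lra.
    + intros x Hx. apply Mpp_ge. fold tn. lra.
  - replace h with (q - p) at 1 by lra. apply RIntR_abs_le. lra. auto.
    intros t Ht. rewrite Rabs_mult, (Rmult_comm eps Mu). apply Rmult_le_compat. apply Rabs_pos. apply Rabs_pos.
    + unfold Pi, Pi1, uk. fold p q.
      replace (u p * (q - t) / h + u q * (t - p) / h) with ((q - t) / h * u p + (t - p) / h * u q) by (field; lra).
      assert (Hc1 : 0 <= (q - t) / h) by (unfold Rdiv; apply Rmult_le_pos; try lra; apply Rlt_le, Rinv_0_lt_compat; lra).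
      assert (Hc2 : 0 <= (t - p) / h) by (unfold Rdiv; apply Rmult_le_pos; try lra; apply Rlt_le, Rinv_0_lt_compat; lra).
      eapply Rle_trans. apply Rabs_triang. rewrite !Rabs_mult, (Rabs_pos_eq ((q - t) / h)), (Rabs_pos_eq ((t - p) / h)) by auto.
      assert (Rabs (u p) <= Mu) by (apply Mu_ge; lra).
      assert (Rabs (u q) <= Mu) by (apply Mu_ge; lra).
      apply Rle_trans with ((q - t) / h * Mu + (t - p) / h * Mu).
      apply Rplus_le_compat; apply Rmult_le_compat_l; auto; unfold Rdiv; apply Rmult_le_pos; try lra; apply Rlt_le, Rinv_0_lt_compat; lra.
      apply Req_le. rewrite Hq. field. lra.
    + unfold K. apply Hsoe. lra.
Qed.


Lemma tk_lt i j : (i < j)%nat -> tk h i < tk h j.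
Proof. intros H. unfold tk. apply Rmult_lt_compat_r. lra. apply lt_INR; auto. Qed.

Lemma E_bound : sumk 1 m (fun l => RInt (fun t => (t - tk h (l - 1)) * (tk h l - t) * K t) (tk h (l - 1)) (tk h l))
  <= Rpower h (2 - a) * (J1 a + / (6 * a)).
Proof.
  assert (HJ := J1_nonneg a Ha).
  assert (Hpa : 0 < / (6 * a)) by (apply Rinv_0_lt_compat; lra).
  assert (Hph := Rpower_pos h (2 - a)).
  destruct m as [|m'] eqn:Hm.
  - rewrite sumk_0. apply Rmult_le_pos; lra.
  - unfold K, tn. set (c := tk h (S (S m'))).
    rewrite sumk_S. replace (S m' - 1)%nat with m' by lia.
    assert (Ec : c = tk h m' + 2 * h) by (unfold c; rewrite !tk_S; ring).
    assert (Ec1 : tk h (S m') = c - h) by (rewrite tk_S; lra).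
    assert (Ec2 : tk h m' = c - 2 * h) by lra.
    assert (Hlast : RInt (fun t => (t - tk h m') * (tk h (S m') - t) * Rpower (c - t) (-1 - a)) (tk h m') (tk h (S m'))
                    = Rpower h (2 - a) * J1 a).
    { rewrite Ec1, Ec2. apply J1_int; auto. }
    rewrite Hlast.
    set (R := fun j => Rpower (c - tk h j) (- a) / a).
    assert (Hchord : forall l, (1 <= l <= m')%nat ->
      RInt (fun t => (t - tk h (l - 1)) * (tk h l - t) * Rpower (c - t) (-1 - a)) (tk h (l - 1)) (tk h l)
      <= h * h / 12 * ((R l - R (l - 1)%nat) + (R (S l) - R l))).
    { intros l Hl.
      assert (Hl1 : tk h l = tk h (l - 1) + h) by (replace l with (S (l - 1)) at 1 by lia; apply tk_S).
      assert (Hlc : tk h l < c) by (apply tk_lt; lia).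
      assert (Hl2 : tk h (S l) < c) by (apply tk_lt; lia).
      eapply Rle_trans. apply (chord_int a Ha c). lra. lra.
      replace (tk h l - tk h (l - 1)) with h by lra.
      assert (T1 : h * Rpower (c - tk h (l - 1)) (-1 - a) <= R l - R (l - 1)%nat).
      { unfold R. replace (c - tk h l) with (c - tk h (l - 1) - h) by lra.
        unfold Rdiv. rewrite <- Rmult_minus_distr_r. apply K_tele; auto. lra. }
      assert (T2 : h * Rpower (c - tk h l) (-1 - a) <= R (S l) - R l).
      { unfold R. rewrite tk_S. replace (c - (tk h l + h)) with (c - tk h l - h) by ring.
        unfold Rdiv. rewrite <- Rmult_minus_distr_r. apply K_tele; auto. rewrite tk_S in Hl2. lra. }
      replace (h ^ 3 / 12 * (Rpower (c - tk h (l - 1)) (-1 - a) + Rpower (c - tk h l) (-1 - a)))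
        with (h * h / 12 * (h * Rpower (c - tk h (l - 1)) (-1 - a) + h * Rpower (c - tk h l) (-1 - a))) by field.
      apply Rmult_le_compat_l. apply Rmult_le_pos; try lra. apply Rmult_le_pos; lra. lra. }
    eapply Rle_trans. apply Rplus_le_compat_r. apply sumk_le. exact Hchord.
    rewrite sumk_scal, sumk_plus, sumk_tele.
    rewrite (sumk_ext m' (fun l => R (S l) - R l) (fun l => (fun j => R (S j)) l - (fun j => R (S j)) (l - 1)%nat)).
    2: { intros l Hl. replace (S (l - 1)) with l by lia. reflexivity. }
    rewrite sumk_tele. cbv beta.
    assert (HR : forall j, 0 <= R j) by (intros; unfold R; apply Rlt_le, Rdiv_lt_0_compat; [apply Rpower_pos|lra]).
    assert (HRm : R m' <= Rpower h (- a) / a).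
    { unfold R. rewrite Ec. replace (tk h m' + 2 * h - tk h m') with (2 * h) by ring.
      unfold Rdiv. apply Rmult_le_compat_r. apply Rlt_le, Rinv_0_lt_compat; lra.
      rewrite !Rpower_Ropp. apply Rinv_le_contravar. apply Rpower_pos. apply Rle_Rpower_l; lra. }
    assert (HRm1 : R (S m') = Rpower h (- a) / a).
    { unfold R. rewrite Ec1. f_equal. f_equal. ring. }
    assert (R 0%nat >= 0) by (apply Rle_ge; auto). assert (0 <= R 1%nat) by auto.
    assert (Hp2 : Rpower h (2 - a) = h * h * Rpower h (- a)).
    { replace (2 - a) with ((- a) + 1 + 1) by ring. rewrite !Rpower_add1 by lra. ring. }
    rewrite Hp2.
    assert (Hhh : 0 <= h * h / 12) by (apply Rmult_le_pos; [apply Rmult_le_pos|]; lra).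
    apply Rle_trans with (h * h / 12 * (2 * (Rpower h (- a) / a)) + h * h * Rpower h (- a) * J1 a).
    apply Rplus_le_compat_r. apply Rmult_le_compat_l; auto. rewrite HRm1. lra.
    apply Req_le. field. lra.
Qed.

End Hist.

Theorem lemma2p7
  (alpha T : R) (NT : nat) (eps : R) (Nexp : nat) (s omega : nat -> R)
  (n : nat) (u : R -> R) :
  0 < alpha < 1 -> 0 < T -> (0 < NT)%nat -> 0 < eps ->
  (forall i, (1 <= i <= Nexp)%nat -> 0 < s i /\ 0 < omega i) ->
  (forall t, T / INR NT <= t <= T ->
     Rabs (Rpower t (-1 - alpha)
           - sumk 1 Nexp (fun i => omega i * exp (- s i * t))) <= eps) ->
  (1 <= n <= NT)%nat ->
  (* u in C^2[0, t_n] *)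
  (forall t, 0 <= t <= tk (T / INR NT) n ->
     ex_derive u t /\ ex_derive (Derive u) t /\ continuous (Derive_n u 2) t) ->
  let dt := T / INR NT in
  let uk := fun k => u (tk dt k) in
  Rabs (caputo alpha u (tk dt n) - fast_caputo alpha dt Nexp s omega uk n)
  <= Rpower dt (2 - alpha) / Gamma (2 - alpha)
       * ((1 - alpha) / 12 + Rpower 2 (2 - alpha) / (2 - alpha)
          - (1 + Rpower 2 (- alpha)))
       * max_abs (Derive_n u 2) 0 (tk dt n)
     + alpha * eps * tk dt (n - 1) / Gamma (1 - alpha)
       * max_abs u 0 (tk dt (n - 1)).
Proof.
  intros Ha HT HNT He _ Hsoe Hn Hu dt uk.
  destruct n as [|m]; [lia|].
  replace (S m - 1)%nat with m by lia.
  set (h := dt) in *. change (T / INR NT) with h in Hu.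
  assert (Hh : 0 < h) by (unfold h, dt; apply Rdiv_lt_0_compat; auto; apply lt_0_INR; lia).
  assert (HtnT : tk h (S m) <= T).
  { unfold tk, h, dt. replace T with (INR NT * (T / INR NT)) at 2 by (field; apply not_0_INR; lia).
    apply Rmult_le_compat_r. apply Rlt_le; auto. apply le_INR; lia. }
  assert (Hsoe' : forall sig, h <= sig <= tk h (S m) ->
     Rabs (Rpower sig (-1 - alpha) - sumk 1 Nexp (fun i => omega i * exp (- s i * sig))) <= eps).
  { intros sig Hs. apply Hsoe. split; [unfold h, dt in Hs; lra | lra]. }
  fold h in Hu.
  set (a := alpha) in *.
  set (b := 1 - a).
  set (tn := tk h (S m)). set (tm := tk h m).
  assert (Etn : tn = tm + h) by (unfold tn, tm, tk; rewrite S_INR; ring).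
  assert (Htm0 : 0 <= tm) by (unfold tm, tk; apply Rmult_le_pos; [apply pos_INR|lra]).
  destruct (Gamma_rel b ltac:(unfold b; lra)) as [HG1 HG2].
  replace (2 - a) with (b + 1) by (unfold b; ring). rewrite HG2.
  set (G1 := Gamma b) in *. fold b.
  set (g := fun tau => Derive u tau / Rpower (tn - tau) a).
  set (P := RInt g 0 tm).
  set (Lval := LvalD a h m u).
  assert (Ecap : caputo a u tn = / G1 * (P + Lval)).
  { unfold caputo. fold b G1. f_equal.
    apply (is_RInt_gen_unique (V := R_CompleteNormedModule)).
    apply is_RInt_gen_intro. intros e He'.
    destruct (local_lim' a h m u Ha Hh Hu e He') as [d [[Hd Hdh] Hlim]].
    exists (fun x => x = 0), (fun y => tn - d < y < tn). split; [|split].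
    - reflexivity.
    - exists (mkposreal d Hd). intros y Hy Hy'. change (Rabs (y - tn) < d) in Hy.
      apply Rabs_lt_between in Hy. lra.
    - intros x y -> Hy. simpl.
      assert (Hg1 : ex_RInt g 0 tm) by (apply (g_ex a h m u Hu); fold tn; lra).
      assert (Hg2 : ex_RInt g tm y) by (apply (g_ex a h m u Hu); fold tn; lra).
      split. apply (exR_Chasles g 0 tm y); auto.
      fold g. rewrite <- (RIntR_Chasles g 0 tm y) by auto. fold P.
      replace (P + RInt g tm y - (P + Lval)) with (RInt g tm y - Lval) by ring.
      apply Hlim. fold tn. lra. }
  set (Mpp := max_abs (Derive_n u 2) 0 tn).
  set (Mu := max_abs u 0 tm).
  assert (HMpp : 0 <= Mpp).
  { apply Rle_trans with (Rabs (Derive_n u 2 0)). apply Rabs_pos.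
    apply (Mpp_ge h m u Hh Hu). fold tn; lra. }
  assert (HMu : 0 <= Mu).
  { apply Rle_trans with (Rabs (u 0)). apply Rabs_pos.
    apply max_abs_cont. lra. intros t Ht. apply (@ex_derive_continuous R_AbsRing R_NormedModule). apply Hu. fold tn; lra. lra. }
  rewrite Ecap. unfold fast_caputo. replace (S m - 1)%nat with m by lia.
  replace (2 - a) with (b + 1) by (unfold b; ring). rewrite HG2. fold b G1.
  set (Wt := sumk 1 Nexp (fun i => omega i * Ui h (s i) uk (S m))).
  set (SW := sumk 1 m (fun l => RInt (fun t => sumk 1 Nexp (fun i => omega i * exp (- s i * (tn - t))) *
                 Pi1 h (fun k => u (tk h k)) l t) (tk h (l - 1)) (tk h l))).
  assert (HW : Wt = SW) by (unfold Wt, SW, uk; apply W_eq).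
  set (SUK := sumk 1 m (fun l => RInt (fun t => u t * Rpower (tn - t) (-1 - a)) (tk h (l - 1)) (tk h l))).
  assert (HP : P = u tm * Rpower h (- a) - u 0 * Rpower tn (- a) - a * SUK).
  { unfold P, g, tn, tm. rewrite (hist_parts a h m u Hh Hu). cbv beta. fold tn tm. f_equal. f_equal.
    unfold SUK, tn, tm. rewrite (int_split a h m u Hh Hu m) by lia. reflexivity. }
  assert (Huk : uk (S m) = u tn /\ uk m = u tm /\ uk 0%nat = u 0).
  { unfold uk, tn, tm. split; auto. split; auto. unfold tk. simpl. rewrite Rmult_0_l. reflexivity. }
  destruct Huk as [U1 [U2 U3]]. rewrite U1, U2, U3.
  fold tn. 
  assert (Hpa : 0 < Rpower h a) by apply Rpower_pos.
  assert (Hpn : 0 < Rpower tn a) by apply Rpower_pos.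
  assert (Hb : 0 < b) by (unfold b; lra).
  assert (Hdiff : / G1 * (P + Lval) - ((u tn - u tm) / (Rpower h a * (b * G1)) +
       / G1 * (u tm / Rpower h a - u 0 / Rpower tn a - a * Wt))
       = / G1 * ((Lval - (u tn - u tm) / (Rpower h a * b)) - a * (SUK - SW))).
  { rewrite HP, HW. rewrite !Rpower_Ropp. field. lra. }
  rewrite Hdiff.
  assert (B1 : Rabs (Lval - (u tn - u tm) / (Rpower h a * b)) <=
                Mpp * (Rpower h (b + 1) / (b + 1) - Rpower h (b + 1) / 2) / b).
  { assert (L := local_bound' a h m u Ha Hh Hu). fold tn tm Lval b Mpp in L.
    replace (2 - a) with (b + 1) in L by (unfold b; ring).
    assert (Ehb : Rpower h b = h / Rpower h a).
    { unfold b. unfold Rminus. rewrite Rpower_plus, Rpower_1, Rpower_Ropp by lra. reflexivity. }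
    rewrite Ehb in L.
    replace (b * Lval - (u tn - u tm) / h * (h / Rpower h a)) with (b * (Lval - (u tn - u tm) / (Rpower h a * b))) in L
      by (field; lra).
    rewrite Rabs_mult, Rabs_right in L by lra.
    apply Rmult_le_reg_l with b; auto. eapply Rle_trans. exact L. right. field. lra. }
  assert (B2 : Rabs (SUK - SW) <= Mpp / 2 * (Rpower h (b + 1) * (J1 a + / (6 * a))) + tm * (eps * Mu)).
  { unfold SUK, SW. rewrite <- sumk_minus. eapply Rle_trans. apply sumk_abs.
    eapply Rle_trans. apply sumk_le. intros l Hl. apply (interval_bound a h m u Nexp s omega eps Hh Hu Hsoe' l Hl).
    rewrite sumk_plus, sumk_scal, sumk_const. fold tn tm Mu Mpp.
    apply Rplus_le_compat.
    - apply Rmult_le_compat_l. lra.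
      replace (b + 1) with (2 - a) by (unfold b; ring).
      exact (E_bound a h m u Nexp s omega eps Ha Hh Hu Hsoe').
    - unfold tm, tk. right. ring. }
  assert (HG1' : 0 < / G1) by (apply Rinv_0_lt_compat; auto).
  rewrite Rabs_mult, (Rabs_right (/ G1)) by lra.
  eapply Rle_trans. apply Rmult_le_compat_l. lra.
  eapply Rle_trans. apply Rabs_triang. rewrite Rabs_Ropp, Rabs_mult, (Rabs_right a) by lra.
  apply Rplus_le_compat. exact B1. apply Rmult_le_compat_l. lra. exact B2.
  right.
  assert (Hx : Rpower 2 (b + 1) = 4 * Rpower 2 (- a)).
  { unfold b. replace (1 - a + 1) with (- a + 1 + 1) by ring. rewrite !Rpower_add1 by lra. ring. }
  rewrite Hx. unfold J1. unfold b. field.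
  repeat split; lra.
Qed.
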